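(* If $(\bar\lambda,\bar\mu)\in[\lambda_0,\infty)\times(0,\infty)$ satisfies $\Xi(\bar\lambda,\bar\mu)=0$, then $\Xi_\lambda(\bar\lambda,\bar\mu)>0$ and $\Xi_\mu(\bar\lambda,\bar\mu)<0$.
   Context: Setting: - $g>0$, $\sigma>0$, and $p_0<p_1<0$. - $\gamma=\gamma_1$ on $[p_0,p_1)$ and $\gamma=\gamma_2$ on $(p_1,0]$, with $\gamma_1\in C^\alpha([p_0,p_1])$ and $\gamma_2\in C^\alpha([p_1,0])$. - $\Gamma(p)=\int_0^p\gamma$, and $a(p;\lambda)=\sqrt{\lambda-2\Gamma(p)}$ for $\lambda>2\max_{[p_0,0]}\Gamma$. - $\mathfrak z(\cdot;\lambda,\mu)$ solves $(a^3\mathfrak z')'-\mu a\mathfrak z=0$ on $(p_0,0)$ with $\mathfrak z(p_0)=0$, $\mathfrak z'(p_0)=1$. - $\Xi(\lambda,\mu):=\lambda^{3/2}\mathfrak z'(0;\lambda,\mu)-(g+\sigma\mu)\mathfrak z(0;\lambda,\mu)$, a real-analytic function of $(\lambda,\mu)$; subscripts denote partial derivatives. - $\lambda_0$ is the unique $\lambda>2\max\Gamma$ with $\frac1g=\int_{p_0}^0a(p;\lambda)^{-3}dp$. *)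

(* Defs.v *)
From Stdlib Require Import Reals Lra ClassicalEpsilon.
Open Scope R_scope.

(* Oriented Riemann integral of f from a to b (well defined whenever f is
   Riemann integrable on [a,b]; RiemannInt does not depend on the proof). *)
Definition RInt (f : R -> R) (a b : R) : R :=
  epsilon (inhabits 0)
    (fun l => exists pr : Riemann_integrable f a b, RiemannInt pr = l).

Definition holder (alpha : R) (f : R -> R) (a b : R) : Prop :=
  exists C : R, forall x y, a <= x <= b -> a <= y <= b ->
    Rabs (f x - f y) <= C * Rpower (Rabs (x - y)) alpha.

(* gamma = gamma1 on [p0,p1), gamma2 on [p1,0] (value at p1 irrelevant). *)
Definition gam (p1 : R) (g1 g2 : R -> R) (p : R) : R :=
  if Rlt_dec p p1 then g1 p else g2 p.

Definition Gam (p1 : R) (g1 g2 : R -> R) (p : R) : R :=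
  RInt (gam p1 g1 g2) 0 p.

Definition aa (p1 : R) (g1 g2 : R -> R) (lam p : R) : R :=
  sqrt (lam - 2 * Gam p1 g1 g2 p).

(* lambda > 2 max_[p0,0] Gamma  (the max is attained, Gamma being continuous) *)
Definition admissible (p0 p1 : R) (g1 g2 : R -> R) (lam : R) : Prop :=
  forall p, p0 <= p <= 0 -> 2 * Gam p1 g1 g2 p < lam.

(* z (with derivative dz) solves (a^3 z')' - mu a z = 0 on (p0,0),
   z(p0) = 0, z'(p0) = 1; z and z' continuous on [p0,0] (so dz at the
   endpoints is the one-sided derivative). *)
Definition is_zsol (p0 : R) (a : R -> R) (mu : R) (z dz : R -> R) : Prop :=
  z p0 = 0 /\ dz p0 = 1 /\
  (forall p, p0 <= p <= 0 -> limit1_in z (fun x => p0 <= x <= 0) (z p) p) /\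
  (forall p, p0 <= p <= 0 -> limit1_in dz (fun x => p0 <= x <= 0) (dz p) p) /\
  (forall p, p0 < p < 0 -> derivable_pt_lim z p (dz p)) /\
  (forall p, p0 < p < 0 ->
     derivable_pt_lim (fun q => a q ^ 3 * dz q) p (mu * a p * z p)).

Definition Xi (g sigma : R) (z dz : R -> R -> R -> R) (lam mu : R) : R :=
  Rpower lam (3/2) * dz lam mu 0 - (g + sigma * mu) * z lam mu 0.

(* Main.v *)
Require Import Defs.
From Stdlib Require Import Reals Lra Psatz ClassicalEpsilon Classical.
From Coquelicot Require Import Coquelicot.
Open Scope R_scope.

Ltac rfix := match goal with |- @eq _ ?a ?b => change (@eq R a b) end.

Lemma cmul (f g : R -> R) x : continuous f x -> continuous g x -> continuous (fun t => f t * g t) x.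
Proof. intros; apply (continuous_mult f g x); auto. Qed.
Lemma cplus (f g : R -> R) x : continuous f x -> continuous g x -> continuous (fun t => f t + g t) x.
Proof. intros; apply (continuous_plus f g x); auto. Qed.
Lemma copp (f : R -> R) x : continuous f x -> continuous (fun t => - f t) x.
Proof. intros; apply (continuous_opp f x); auto. Qed.
Lemma cminus (f g : R -> R) x : continuous f x -> continuous g x -> continuous (fun t => f t - g t) x.
Proof. intros; apply (continuous_minus f g x); auto. Qed.
Lemma cconst (c x : R) : continuous (fun _ : R => c) x.
Proof. apply continuous_const. Qed.
Lemma cid (x : R) : continuous (fun t : R => t) x.
Proof. apply continuous_id. Qed.
Lemma cpow (f : R -> R) n x : continuous f x -> continuous (fun t => f t ^ n) x.
Proof. intros H; induction n; simpl. apply cconst. apply cmul; auto. Qed.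
Lemma cinv (f : R -> R) x : continuous f x -> f x <> 0 -> continuous (fun t => / f t) x.
Proof. intros; apply continuous_Rinv_comp; auto. Qed.
Lemma cpt_c (f : R -> R) x : continuity_pt f x -> continuous f x.
Proof. intros H; apply continuity_pt_filterlim in H; exact H. Qed.
Lemma c_cpt (f : R -> R) x : continuous f x -> continuity_pt f x.
Proof. intros H; apply continuity_pt_filterlim; exact H. Qed.

Ltac cont := repeat (match goal with
 | |- continuous (fun _ => ?c) _ => apply cconst
 | |- continuous (fun t => _ * _) _ => apply cmul
 | |- continuous (fun t => _ + _) _ => apply cplus
 | |- continuous (fun t => _ - _) _ => apply cminus
 | |- continuous (fun t => - _) _ => apply copp
 | |- continuous (fun t => _ ^ _) _ => apply cpow
 | |- continuous (fun t => / _) _ => apply cinv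
 end); auto.

Lemma cont_eps (f : R -> R) x0 : continuous f x0 -> forall eps, 0 < eps ->
  exists d, 0 < d /\ forall x, Rabs (x - x0) < d -> Rabs (f x - f x0) < eps.
Proof.
  intros H eps He. apply c_cpt in H.
  destruct (H eps He) as [d [Hd Hx]]. exists d; split; auto.
  intros x Hxd. destruct (Req_dec x x0) as [->|Hne].
  - rewrite Rminus_diag, Rabs_R0; auto.
  - apply (Hx x). split. split; [exact I| auto]. exact Hxd.
Qed.

Lemma exR (f : R -> R) a b : (forall x, continuous f x) -> ex_RInt f a b.
Proof. intros; apply (@ex_RInt_continuous R_CompleteNormedModule); auto. Qed.

Lemma RInt_defs (f : R -> R) a b : ex_RInt f a b -> @eq R (Defs.RInt f a b) (RInt f a b).
Proof.
  intro H. unfold Defs.RInt.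
  destruct (epsilon_spec (inhabits 0) (fun l => exists pr : Riemann_integrable f a b, RiemannInt pr = l)) as [pr Hpr].
  exists (RiemannInt (ex_RInt_Reals_0 _ _ _ H)). eexists; reflexivity.
  rewrite <- Hpr. symmetry. apply RInt_Reals.
Qed.

Lemma RInt_plus' (f g : R -> R) a b : ex_RInt f a b -> ex_RInt g a b ->
  @eq R (RInt (fun x => f x + g x) a b) (RInt f a b + RInt g a b).
Proof. intros; apply (RInt_plus f g); auto. Qed.
Lemma RInt_minus' (f g : R -> R) a b : ex_RInt f a b -> ex_RInt g a b ->
  @eq R (RInt (fun x => f x - g x) a b) (RInt f a b - RInt g a b).
Proof. intros; apply (RInt_minus f g); auto. Qed.
Lemma RInt_scal' (f : R -> R) a b l : ex_RInt f a b ->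
  @eq R (RInt (fun x => l * f x) a b) (l * RInt f a b).
Proof. intros; apply (RInt_scal f); auto. Qed.

Lemma RInt_ext' (f g : R -> R) a b : (forall x, f x = g x) -> @eq R (RInt f a b) (RInt g a b).
Proof. intros H; apply RInt_ext; intros; apply H. Qed.

Lemma dcont (f : R -> R) x l : is_derive f x l -> continuous f x.
Proof. intros H. apply (@ex_derive_continuous R_AbsRing R_NormedModule). exists l; exact H. Qed.

Lemma dconst (c x : R) : is_derive (fun _ : R => c) x 0.
Proof. apply (@is_derive_const R_AbsRing R_NormedModule). Qed.
Lemma dplus (f g : R -> R) x a b : is_derive f x a -> is_derive g x b -> is_derive (fun t => f t + g t) x (a + b).
Proof. intros; apply (is_derive_plus f g); auto. Qed.
Lemma dminus (f g : R -> R) x a b : is_derive f x a -> is_derive g x b -> is_derive (fun t => f t - g t) x (a - b).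
Proof. intros; apply (is_derive_minus f g); auto. Qed.
Lemma dopp (f : R -> R) x a : is_derive f x a -> is_derive (fun t => - f t) x (- a).
Proof. intros; apply (is_derive_opp f); auto. Qed.
Lemma dmul (f g : R -> R) x a b : is_derive f x a -> is_derive g x b -> is_derive (fun t => f t * g t) x (a * g x + f x * b).
Proof. intros; apply Derive.is_derive_mult; auto. Qed.
Lemma dext (f : R -> R) x a b : is_derive f x a -> a = b -> is_derive f x b.
Proof. intros; subst; auto. Qed.

Lemma derive_RInt_all (f : R -> R) a x : (forall y, continuous f y) ->
  is_derive (fun t => RInt f a t) x (f x).
Proof.
  intros Hc. apply (is_derive_RInt f (fun t => RInt f a t) a x).
  - apply filter_forall. intros y. apply (@RInt_correct R_CompleteNormedModule). apply exR; auto.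
  - auto.
Qed.

Lemma ftc (F f : R -> R) (a b : R) : a <= b ->
  (forall x, continuous F x) -> (forall x, continuous f x) ->
  (forall x, a < x < b -> is_derive F x (f x)) ->
  @eq R (RInt f a b) (F b - F a).
Proof.
  intros Hab HF Hf Hd.
  set (G := fun x => F x - RInt f a x).
  destruct (MVT_gen G a b (fun _ => 0)) as [c [Hc HG]].
  - intros x Hx. rewrite Rmin_left in Hx by lra. rewrite Rmax_right in Hx by lra.
    unfold G. replace 0 with (f x - f x) by ring.
    apply (is_derive_minus F (fun t => RInt f a t)). auto. apply derive_RInt_all; auto.
  - intros x _. apply c_cpt. unfold G. apply cminus. auto.
    eapply dcont. apply derive_RInt_all; auto.
  - unfold G in HG. rewrite RInt_point in HG. unfold zero in HG; simpl in HG. lra.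
Qed.

Lemma mono (F f : R -> R) a b : a <= b -> (forall x, a <= x <= b -> continuous F x) ->
  (forall x, a < x < b -> is_derive F x (f x)) -> (forall x, a <= x <= b -> 0 <= f x) -> F a <= F b.
Proof.
  intros Hab HF Hd Hp.
  destruct (MVT_gen F a b f) as [c [Hc HG]].
  - intros x Hx. rewrite Rmin_left in Hx by lra. rewrite Rmax_right in Hx by lra. auto.
  - intros x Hx. rewrite Rmin_left in Hx by lra. rewrite Rmax_right in Hx by lra. apply c_cpt; auto.
  - rewrite Rmin_left in Hc by lra. rewrite Rmax_right in Hc by lra.
    specialize (Hp c Hc). nra.
Qed.

Lemma RInt_pos_pt (f : R -> R) a b x0 : a < b -> (forall x, continuous f x) ->
  (forall x, a <= x <= b -> 0 <= f x) -> a <= x0 <= b -> 0 < f x0 -> 0 < RInt f a b.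
Proof.
  intros Hab Hc Hp Hx0 Hf0.
  destruct (cont_eps f x0 (Hc x0) (f x0 / 2)) as [d [Hd Hball]]. lra.
  set (c := Rmax a (x0 - d/2)). set (e := Rmin b (x0 + d/2)).
  assert (Hac : a <= c) by (apply Rmax_l).
  assert (Heb : e <= b) by (apply Rmin_l).
  assert (Hce : c < e).
  { unfold c, e. apply Rmax_lub_lt; apply Rmin_glb_lt; lra. }
  assert (Hc1 : x0 - d/2 <= c) by apply Rmax_r.
  assert (He1 : e <= x0 + d/2) by apply Rmin_r.
  rewrite <- (RInt_Chasles f a c b) by (apply exR; auto).
  rewrite <- (RInt_Chasles f c e b) by (apply exR; auto).
  unfold plus; simpl.
  assert (0 <= RInt f a c).
  { apply RInt_ge_0; auto. apply exR; auto. intros; apply Hp; lra. }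
  assert (0 <= RInt f e b).
  { apply RInt_ge_0; auto. apply exR; auto. intros; apply Hp; lra. }
  assert (0 < RInt f c e).
  { apply RInt_gt_0; auto. intros x Hx. assert (Rabs (x - x0) < d) by (apply Rabs_def1; lra).
    specialize (Hball x H1). apply Rabs_def2 in Hball. lra. }
  lra.
Qed.

Lemma gronwall (F F' : R -> R) a b K c F0 : a <= b -> 0 < K -> 0 <= c -> 0 <= F0 ->
  (forall x, continuous F x) -> F a <= F0 ->
  (forall x, a < x < b -> is_derive F x (F' x)) ->
  (forall x, a <= x <= b -> F' x <= K * F x + c) ->
  forall x, a <= x <= b -> F x <= (F0 + c / K) * exp (K * (b - a)).
Proof.
  intros Hab HK Hc HF0 HF Ha Hd Hb x Hx.
  set (Phi := fun t => - ((F t + c / K) * exp (- K * (t - a)))).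
  assert (Hm : Phi a <= Phi x).
  { apply (mono Phi (fun t => (K * F t + c - F' t) * exp (- K * (t - a))) a x); try lra.
    - intros t _. unfold Phi. apply copp. apply cmul. apply cplus; auto. apply cconst.
      apply (continuous_comp (fun t => - K * (t - a)) exp). apply cmul. apply cconst. apply cminus. apply cid. apply cconst.
      eapply dcont. apply is_derive_exp.
    - intros t Ht. unfold Phi.
      assert (Hde : is_derive (fun t => exp (- K * (t - a))) t (- K * exp (- K * (t - a)))).
      { auto_derive. auto. unfold Rminus. ring. }
      assert (HdF : is_derive (fun t => F t + c / K) t (F' t)).
      { apply (dext _ _ (F' t + 0)). apply dplus. apply Hd; lra. apply dconst. apply Rplus_0_r. }
      assert (H := Derive.is_derive_mult _ _ t _ _ HdF Hde).
      eapply dext. apply (dopp (fun t => (F t + c / K) * exp (- K * (t - a)))). exact H.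
      simpl. field. lra.
    - intros t Ht. apply Rmult_le_pos. specialize (Hb t ltac:(lra)). lra. apply Rlt_le, exp_pos. }
  unfold Phi in Hm. rewrite Rminus_diag, Rmult_0_r, exp_0 in Hm.
  assert (Hex : exp (- K * (x - a)) * exp (K * (x - a)) = 1).
  { rewrite <- exp_plus. replace (- K * (x - a) + K * (x - a)) with 0 by ring. apply exp_0. }
  assert (HE1 : exp (K * (x - a)) <= exp (K * (b - a))).
  { destruct (Req_dec x b) as [->|]. lra. left. apply exp_increasing. nra. }
  assert (Hpos := exp_pos (K * (x - a))). assert (Hpos2 := exp_pos (- K * (x - a))).
  assert (HcK : 0 <= c / K) by (apply Rmult_le_pos; [lra| left; apply Rinv_0_lt_compat; lra]).
  assert (H1 : F x + c / K <= (F0 + c / K) * exp (K * (x - a))).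
  { apply (Rmult_le_reg_r (exp (- K * (x - a)))); auto. 
    replace ((F0 + c / K) * exp (K * (x - a)) * exp (- K * (x - a))) with (F0 + c / K) by (rewrite Rmult_assoc, (Rmult_comm (exp _)), Hex; ring).
    lra. }
  assert ((F0 + c / K) * exp (K * (x - a)) <= (F0 + c / K) * exp (K * (b - a))) by (apply Rmult_le_compat_l; lra).
  lra.
Qed.

Definition Sol (p0 : R) (A : R -> R) (mu : R) (Z D : R -> R) : Prop :=
  (forall x, continuous A x) /\ (forall x, 0 < A x) /\
  (forall x, continuous Z x) /\ (forall x, continuous D x) /\
  Z p0 = 0 /\ D p0 = 1 /\
  (forall p, p0 < p < 0 -> is_derive Z p (D p)) /\
  (forall p, p0 < p < 0 -> is_derive (fun q => A q ^ 3 * D q) p (mu * A p * Z p)).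

Lemma loc_ball (P : R -> Prop) x d : 0 < d -> (forall y, Rabs (y - x) < d -> P y) -> locally x P.
Proof. intros Hd H. exists (mkposreal d Hd). intros y Hy. apply H. exact Hy. Qed.

Lemma A3pos (A : R -> R) (x : R) : (forall x, 0 < A x) -> 0 < A x ^ 3.
Proof. intros H. apply pow_lt. auto. Qed.

Lemma Sol_W_cont p0 (A : R -> R) mu (Z D : R -> R) : Sol p0 A mu Z D -> forall x, continuous (fun q => A q ^ 3 * D q) x.
Proof. intros (HA & _ & _ & HD & _) x. apply cmul. apply cpow; auto. auto. Qed.

Lemma W_pos p0 (A : R -> R) mu (Z D : R -> R) : p0 < 0 -> 0 <= mu -> Sol p0 A mu Z D ->
  forall x, p0 <= x <= 0 -> 0 < A x ^ 3 * D x.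
Proof.
  intros Hp0 Hmu HS. pose proof HS as (HA & HAp & HZ & HD & HZ0 & HD0 & HdZ & HdW).
  set (W := fun q => A q ^ 3 * D q).
  assert (HWc : forall x, continuous W x) by (apply Sol_W_cont with p0 mu Z; auto).
  assert (HWp0 : 0 < W p0) by (unfold W; rewrite HD0, Rmult_1_r; apply A3pos; auto).
  set (V := fun q => W q * Z q).
  set (V' := fun q => mu * A q * Z q ^ 2 + A q ^ 3 * D q ^ 2).
  assert (HdV : forall p, p0 < p < 0 -> is_derive V p (V' p)).
  { intros p Hp. unfold V, V'. eapply dext. apply dmul. apply HdW; auto. apply HdZ; auto.
    unfold W. simpl. ring. }
  assert (HV'p : forall p, 0 <= V' p).
  { intros p. unfold V'. assert (0 < A p) by auto. apply Rplus_le_le_0_compat.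
    apply Rmult_le_pos. apply Rmult_le_pos; lra. apply pow2_ge_0.
    apply Rmult_le_pos. left; apply A3pos; auto. apply pow2_ge_0. }
  assert (HVc : forall x, continuous V x) by (intros; unfold V; apply cmul; auto).
  intros x Hx. apply Rnot_le_lt. intros Hneg. change (W x <= 0) in Hneg.
  assert (Hpx : p0 < x).
  { destruct (Req_dec x p0) as [->|]; lra. }
  assert (Hs : exists s, p0 < s <= x /\ W s = 0).
  { destruct (Req_dec (W x) 0) as [E|NE]. exists x; split; [lra|auto].
    destruct (IVT (fun t => - W t) p0 x) as [s [Hs1 Hs2]].
    - intros t. apply c_cpt. apply copp; auto.
    - lra.
    - lra.
    - lra.
    - exists s. split. split; [|lra]. destruct (Req_dec s p0) as [->|]. lra. lra. lra. }
  destruct Hs as [s [Hs Hws]].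
  assert (HVs : V s = 0) by (unfold V; rewrite Hws; ring).
  assert (HVp0 : V p0 = 0) by (unfold V; rewrite HZ0; ring).
  assert (HV0 : forall t, p0 <= t <= s -> V t = 0).
  { intros t Ht. apply Rle_antisym.
    - rewrite <- HVs. apply (mono V V' t s); try lra. intros; auto. intros; apply HdV; lra. intros; auto.
    - rewrite <- HVp0. apply (mono V V' p0 t); try lra. intros; auto. intros; apply HdV; lra. intros; auto. }
  destruct (cont_eps W p0 (HWc p0) (W p0 / 2)) as [d [Hd Hball]]. lra.
  set (t := p0 + Rmin d (s - p0) / 2).
  assert (Hm1 : Rmin d (s - p0) <= d) by apply Rmin_l.
  assert (Hm2 : Rmin d (s - p0) <= s - p0) by apply Rmin_r.
  assert (Hm3 : 0 < Rmin d (s - p0)) by (apply Rmin_glb_lt; lra).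
  assert (Ht : p0 < t < s) by (unfold t; lra).
  assert (HWt : 0 < W t).
  { assert (Rabs (t - p0) < d) by (unfold t; rewrite Rabs_right; lra).
    specialize (Hball t H). apply Rabs_def2 in Hball. lra. }
  assert (Hd0 : is_derive V t 0).
  { apply (is_derive_ext_loc (fun _ => 0)). 
    apply (loc_ball _ t (Rmin (t - p0) (s - t))). apply Rmin_glb_lt; lra.
    intros y Hy. assert (Rmin (t - p0) (s - t) <= t - p0) by apply Rmin_l.
    assert (Rmin (t - p0) (s - t) <= s - t) by apply Rmin_r.
    apply Rabs_def2 in Hy. symmetry. apply HV0. lra.
    apply dconst. }
  assert (HdVt := HdV t ltac:(lra)).
  apply is_derive_unique in Hd0. apply is_derive_unique in HdVt. rewrite Hd0 in HdVt.
  unfold V' in HdVt.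
  assert (0 < A t) by auto.
  assert (0 <= mu * A t * Z t ^ 2) by (apply Rmult_le_pos; [apply Rmult_le_pos; lra | apply pow2_ge_0]).
  assert (0 <= A t ^ 3 * D t ^ 2) by (apply Rmult_le_pos; [left; apply A3pos; auto | apply pow2_ge_0]).
  assert (A t ^ 3 * D t ^ 2 = 0) by lra.
  assert (D t = 0).
  { apply Rmult_integral in H2. destruct H2. pose proof (A3pos A t HAp). lra.
    simpl in H2. rewrite Rmult_1_r in H2. apply Rmult_integral in H2. destruct H2; auto. }
  unfold W in HWt. rewrite H3 in HWt. lra.
Qed.

Lemma D_pos p0 (A : R -> R) mu (Z D : R -> R) : p0 < 0 -> 0 <= mu -> Sol p0 A mu Z D ->
  forall x, p0 <= x <= 0 -> 0 < D x.
Proof.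
  intros Hp Hmu HS x Hx. pose proof (W_pos p0 A mu Z D Hp Hmu HS x Hx) as H.
  destruct HS as (_ & HAp & _).
  pose proof (A3pos A x HAp). nra.
Qed.

Lemma Z_nonneg p0 (A : R -> R) mu (Z D : R -> R) : p0 < 0 -> 0 <= mu -> Sol p0 A mu Z D ->
  forall x, p0 <= x <= 0 -> 0 <= Z x.
Proof.
  intros Hp Hmu HS x Hx. pose proof HS as (HA & HAp & HZ & HD & HZ0 & HD0 & HdZ & HdW).
  rewrite <- HZ0. apply (mono Z D); try lra. intros; auto. intros; apply HdZ; lra.
  intros; left; apply (D_pos p0 A mu Z D); auto; lra.
Qed.

Lemma Z0_pos p0 (A : R -> R) mu (Z D : R -> R) : p0 < 0 -> 0 <= mu -> Sol p0 A mu Z D -> 0 < Z 0.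
Proof.
  intros Hp Hmu HS. pose proof HS as (HA & HAp & HZ & HD & HZ0 & HD0 & HdZ & HdW).
  destruct (MVT_gen Z p0 0 D) as [c [Hc HM]].
  - intros x Hx. rewrite Rmin_left in Hx by lra. rewrite Rmax_right in Hx by lra. auto.
  - intros x Hx. apply c_cpt; auto.
  - rewrite Rmin_left in Hc by lra. rewrite Rmax_right in Hc by lra.
    pose proof (D_pos p0 A mu Z D Hp Hmu HS c Hc). rewrite HZ0 in HM. nra.
Qed.

Lemma green p0 (A1 : R -> R) mu1 (Z1 D1 A2 : R -> R) mu2 (Z2 D2 : R -> R) : p0 < 0 ->
  Sol p0 A1 mu1 Z1 D1 -> Sol p0 A2 mu2 Z2 D2 ->
  A1 0 ^ 3 * D1 0 * Z2 0 - A2 0 ^ 3 * D2 0 * Z1 0 =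
  RInt (fun q => (mu1 * A1 q - mu2 * A2 q) * Z1 q * Z2 q + (A1 q ^ 3 - A2 q ^ 3) * D1 q * D2 q) p0 0.
Proof.
  intros Hp HS1 HS2.
  pose proof HS1 as (HA1 & HAp1 & HZ1 & HD1 & HZ01 & HD01 & HdZ1 & HdW1).
  pose proof HS2 as (HA2 & HAp2 & HZ2 & HD2 & HZ02 & HD02 & HdZ2 & HdW2).
  rewrite (ftc (fun q => A1 q ^ 3 * D1 q * Z2 q - A2 q ^ 3 * D2 q * Z1 q)).
  - rewrite HZ01, HZ02. ring.
  - lra.
  - intros x. apply cminus; apply cmul; auto; apply cmul; auto; apply cpow; auto.
  - intros x. apply cplus; apply cmul; try apply cmul; auto.
    apply cminus; apply cmul; auto. apply cconst. apply cconst.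
    apply cminus; apply cpow; auto.
  - intros x Hx. eapply dext. apply dminus; apply dmul. apply HdW1; auto. apply HdZ2; auto.
    apply HdW2; auto. apply HdZ1; auto. simpl. ring.
Qed.

Lemma Nmu_neg p0 (A : R -> R) mu (Z D : R -> R) g sigma : p0 < 0 -> 0 < mu -> 0 < g -> Sol p0 A mu Z D ->
  A 0 ^ 3 * D 0 = (g + sigma * mu) * Z 0 ->
  RInt (fun q => / A q ^ 3) p0 0 <= / g ->
  RInt (fun q => A q * Z q ^ 2) p0 0 - sigma * Z 0 ^ 2 < 0.
Proof.
  intros Hp Hmu Hg HS HXi HI.
  pose proof HS as (HA & HAp & HZ & HD & HZ0 & HD0 & HdZ & HdW).
  assert (HA3c : forall x, continuous (fun q => A q ^ 3) x) by (intros; apply cpow; auto).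
  assert (HA3n : forall x, A x ^ 3 <> 0) by (intros x; apply Rgt_not_eq, A3pos; auto).
  assert (HiAc : forall x, continuous (fun q => / A q ^ 3) x) by (intros; apply cinv; auto).
  assert (HWc : forall x, continuous (fun q => A q ^ 3 * D q) x) by (intros; apply cmul; auto).
  set (W := fun q => A q ^ 3 * D q).
  set (J := RInt (fun q => A q ^ 3 * D q ^ 2) p0 0).
  set (I := RInt (fun q => / A q ^ 3) p0 0).
  set (K := RInt (fun q => A q * Z q ^ 2) p0 0).
  set (Z0 := Z 0).
  assert (HZ0p : 0 < Z0) by (apply (Z0_pos p0 A mu Z D); auto; lra).
  assert (HZnn : forall x, p0 <= x <= 0 -> 0 <= Z x) by (apply (Z_nonneg p0 A mu Z D); auto; lra).
  assert (HE : mu * K + J = W 0 * Z0).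
  { unfold K, J. rewrite <- RInt_scal' by (apply exR; intros; apply cmul; auto; apply cpow; auto).
    rewrite <- RInt_plus' by (apply exR; intros; cont).
    rewrite (ftc (fun q => W q * Z q)). unfold Z0; rewrite HZ0. ring. lra.
    intros; apply cmul; auto.
    intros; apply cplus; cont.
    intros x Hx. eapply dext. apply dmul. apply HdW; auto. apply HdZ; auto. unfold W. simpl. ring. }
  assert (HIp : 0 < I).
  { apply (RInt_pos_pt _ p0 0 0). lra. auto. intros; left; apply Rinv_0_lt_compat, A3pos; auto.
    lra. apply Rinv_0_lt_compat, A3pos; auto. }
  assert (HDint : RInt D p0 0 = Z0).
  { rewrite (ftc Z D); auto. unfold Z0; rewrite HZ0; rfix; ring. lra. }
  assert (HWinc : W p0 < W 0).
  { assert (H : RInt (fun q => mu * A q * Z q) p0 0 = W 0 - W p0).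
    { apply ftc. lra. auto. intros; cont. intros; apply HdW; auto. }
    assert (0 < RInt (fun q => mu * A q * Z q) p0 0).
    { apply (RInt_pos_pt _ p0 0 0). lra. intros; cont.
      intros x Hx. specialize (HZnn x Hx). specialize (HAp x). apply Rmult_le_pos; [apply Rmult_le_pos|]; lra.
      lra. specialize (HAp 0). apply Rmult_lt_0_compat; [apply Rmult_lt_0_compat|]; auto. }
    lra. }
  set (c := Z0 / I).
  assert (Hh : 0 < RInt (fun q => / A q ^ 3 * (W q - c) ^ 2) p0 0).
  { assert (Hx0 : exists x0, p0 <= x0 <= 0 /\ W x0 <> c).
    { destruct (Req_dec (W p0) c). exists 0. split. lra. lra. exists p0. split; auto. lra. }
    destruct Hx0 as [x0 [Hx0 Hne]].
    apply (RInt_pos_pt _ p0 0 x0). lra.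
    intros; apply cmul; auto. apply cpow. apply cminus; auto. apply cconst.
    intros; apply Rmult_le_pos. left; apply Rinv_0_lt_compat, A3pos; auto. apply pow2_ge_0.
    auto. apply Rmult_lt_0_compat. apply Rinv_0_lt_compat, A3pos; auto.
    apply pow2_gt_0. lra. }
  assert (Hh2 : RInt (fun q => / A q ^ 3 * (W q - c) ^ 2) p0 0 = J - 2 * c * Z0 + c ^ 2 * I).
  { rewrite (RInt_ext' _ (fun q => (A q ^ 3 * D q ^ 2 - 2 * c * D q) + c ^ 2 * / A q ^ 3)).
    rewrite RInt_plus', RInt_minus', !RInt_scal'. unfold J, I. rewrite HDint. rfix; ring.
    all: try (apply exR; intros; cont).
    intros x. unfold W. field. apply Rgt_not_eq, HAp. }
  assert (HJ : J > Z0 ^ 2 / I).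
  { rewrite Hh2 in Hh. unfold c in Hh. replace (Z0 ^ 2 / I) with (2 * (Z0 / I) * Z0 - (Z0 / I) ^ 2 * I) by (field; lra). lra. }
  assert (HgI : g * I <= 1).
  { assert (H := Rmult_le_compat_l g _ _ ltac:(lra) HI). rewrite Rinv_r in H by lra. exact H. }
  assert (HgZ : g * Z0 ^ 2 <= Z0 ^ 2 / I).
  { assert (Heq : Z0 ^ 2 / I - g * Z0 ^ 2 = Z0 ^ 2 * (1 - g * I) * / I) by (field; lra).
    assert (0 <= Z0 ^ 2 * (1 - g * I) * / I).
    { apply Rmult_le_pos. apply Rmult_le_pos. apply pow2_ge_0. lra. left; apply Rinv_0_lt_compat; lra. }
    lra. }
  assert (Hfin : mu * (K - sigma * Z0 ^ 2) < 0).
  { unfold W in HE. rewrite HXi in HE. fold Z0 in HE.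
    assert (E : J = (g + sigma * mu) * Z0 * Z0 - mu * K) by lra.
    replace (mu * (K - sigma * Z0 ^ 2)) with (g * Z0 ^ 2 - J) by (rewrite E; ring). lra. }
  fold K. fold Z0. apply Rnot_le_lt. intros Hc.
  assert (0 <= mu * (K - sigma * Z0 ^ 2)) by (apply Rmult_le_pos; lra). lra.
Qed.

Lemma sq_le x K : Rabs x <= K -> x ^ 2 <= K ^ 2.
Proof. intros H. rewrite <- (pow2_abs x). assert (0 <= Rabs x) by apply Rabs_pos.
  apply pow_incr. lra. Qed.

Lemma prod_sq_le x y K e : Rabs x <= K -> Rabs y <= e -> (x * y) ^ 2 <= K ^ 2 * e ^ 2.
Proof. intros H1 H2. rewrite Rpow_mult_distr. apply sq_le in H1. apply sq_le in H2.
  apply Rmult_le_compat; auto; apply pow2_ge_0. Qed.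

Lemma alg_bound u U i1 W2 e1 m A1 e2 Z2 Ki KA Km Ks eps :
  0 < i1 <= Ki -> 0 < A1 <= KA -> Rabs m <= Km -> Rabs W2 <= Ks -> Rabs Z2 <= Ks ->
  Rabs e1 <= eps -> Rabs e2 <= eps ->
  2 * u * (U * i1 + W2 * e1) + 2 * U * (m * A1 * u + e2 * Z2) <=
  (Ki + Km * KA + 1) * (u ^ 2 + U ^ 2) + 2 * Ks ^ 2 * eps ^ 2.
Proof.
  intros Hi HA Hm HW HZ He1 He2.
  assert (Q1 : 2 * u * U <= u ^ 2 + U ^ 2) by (assert (0 <= (u - U) ^ 2) by apply pow2_ge_0; nra).
  assert (Q2 : - (u ^ 2 + U ^ 2) <= 2 * u * U) by (assert (0 <= (u + U) ^ 2) by apply pow2_ge_0; nra).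
  assert (Hs0 : 0 <= u ^ 2 + U ^ 2) by (assert (0 <= u ^ 2) by apply pow2_ge_0; assert (0 <= U ^ 2) by apply pow2_ge_0; lra).
  assert (s1 : 2 * u * U * i1 <= Ki * (u ^ 2 + U ^ 2)).
  { apply Rle_trans with (i1 * (u ^ 2 + U ^ 2)). nra. apply Rmult_le_compat_r; lra. }
  assert (s2 : 2 * u * (W2 * e1) <= u ^ 2 + Ks ^ 2 * eps ^ 2).
  { assert (0 <= (u - W2 * e1) ^ 2) by apply pow2_ge_0.
    assert ((W2 * e1) ^ 2 <= Ks ^ 2 * eps ^ 2) by (apply prod_sq_le; auto). nra. }
  assert (s4 : 2 * U * (e2 * Z2) <= U ^ 2 + Ks ^ 2 * eps ^ 2).
  { assert (0 <= (U - e2 * Z2) ^ 2) by apply pow2_ge_0.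
    assert ((e2 * Z2) ^ 2 <= Ks ^ 2 * eps ^ 2).
    { rewrite Rmult_comm. apply prod_sq_le; auto. }
    nra. }
  assert (s3 : 2 * u * U * (m * A1) <= Km * KA * (u ^ 2 + U ^ 2)).
  { assert (Hma : Rabs (m * A1) <= Km * KA).
    { rewrite Rabs_mult. rewrite (Rabs_right A1) by lra. apply Rmult_le_compat; auto; try lra. apply Rabs_pos. }
    destruct (Rle_or_lt 0 (m * A1)) as [P|P].
    - rewrite Rabs_right in Hma by lra.
      apply Rle_trans with ((m * A1) * (u ^ 2 + U ^ 2)). nra. apply Rmult_le_compat_r; lra.
    - rewrite Rabs_left in Hma by lra.
      apply Rle_trans with (- (m * A1) * (u ^ 2 + U ^ 2)). nra. apply Rmult_le_compat_r; lra. }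
  replace (2 * u * (U * i1 + W2 * e1) + 2 * U * (m * A1 * u + e2 * Z2)) with
    (2 * u * U * i1 + 2 * u * (W2 * e1) + 2 * u * U * (m * A1) + 2 * U * (e2 * Z2)) by ring.
  lra.
Qed.

Lemma est p0 (A1 : R -> R) mu1 (Z1 D1 A2 : R -> R) mu2 (Z2 D2 : R -> R) Ki KA Km Ks eps :
  p0 < 0 -> Sol p0 A1 mu1 Z1 D1 -> Sol p0 A2 mu2 Z2 D2 ->
  0 <= Ki -> 0 <= KA -> 0 <= Km -> 0 <= Ks -> 0 <= eps ->
  (forall q, p0 <= q <= 0 -> / A1 q ^ 3 <= Ki /\ A1 q <= KA /\ Rabs (A2 q ^ 3 * D2 q) <= Ks /\ Rabs (Z2 q) <= Ks
     /\ Rabs (/ A1 q ^ 3 - / A2 q ^ 3) <= eps /\ Rabs (mu1 * A1 q - mu2 * A2 q) <= eps) ->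
  Rabs mu1 <= Km -> Rabs (A1 p0 ^ 3 - A2 p0 ^ 3) <= eps ->
  forall q, p0 <= q <= 0 -> (Z1 q - Z2 q) ^ 2 + (A1 q ^ 3 * D1 q - A2 q ^ 3 * D2 q) ^ 2 <=
     eps ^ 2 * ((1 + 2 * Ks ^ 2 / (Ki + Km * KA + 1)) * exp ((Ki + Km * KA + 1) * (0 - p0))).
Proof.
  intros Hp HS1 HS2 HKi HKA HKm HKs Heps Hb Hm Hp0 q Hq.
  pose proof HS1 as (HA1 & HAp1 & HZ1 & HD1 & HZ01 & HD01 & HdZ1 & HdW1).
  pose proof HS2 as (HA2 & HAp2 & HZ2 & HD2 & HZ02 & HD02 & HdZ2 & HdW2).
  set (K := Ki + Km * KA + 1).
  assert (HK : 0 < K) by (unfold K; assert (0 <= Km * KA) by (apply Rmult_le_pos; auto); lra).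
  set (E := fun q => (Z1 q - Z2 q) ^ 2 + (A1 q ^ 3 * D1 q - A2 q ^ 3 * D2 q) ^ 2).
  set (E' := fun q => 2 * (Z1 q - Z2 q) * (D1 q - D2 q) + 2 * (A1 q ^ 3 * D1 q - A2 q ^ 3 * D2 q) * (mu1 * A1 q * Z1 q - mu2 * A2 q * Z2 q)).
  assert (G := gronwall E E' p0 0 K (2 * Ks ^ 2 * eps ^ 2) (eps ^ 2)).
  replace (eps ^ 2 * ((1 + 2 * Ks ^ 2 / K) * exp (K * (0 - p0)))) with ((eps ^ 2 + 2 * Ks ^ 2 * eps ^ 2 / K) * exp (K * (0 - p0))) by (field; lra).
  apply G; auto; try lra.
  - apply Rmult_le_pos. apply Rmult_le_pos. lra. apply pow2_ge_0. apply pow2_ge_0.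
  - apply pow2_ge_0.
  - intros x. unfold E. cont.
  - unfold E. rewrite HZ01, HZ02, HD01, HD02. replace (0 - 0) with 0 by ring. rewrite !Rmult_1_r.
    replace ((0:R) ^ 2) with 0 by ring. rewrite Rplus_0_l. apply sq_le. auto.
  - intros x Hx. unfold E, E'. eapply dext. apply dplus; apply (is_derive_pow _ 2); apply dminus.
    apply HdZ1; auto. apply HdZ2; auto. apply HdW1; auto. apply HdW2; auto. simpl. ring.
  - intros x Hx. destruct (Hb x Hx) as (B1 & B2 & B3 & B4 & B5 & B6).
    unfold E, E'.
    assert (P1 : 0 < A1 x) by auto. assert (P2 : 0 < A2 x) by auto.
    assert (P13 : 0 < A1 x ^ 3) by (apply pow_lt; auto). assert (P23 : 0 < A2 x ^ 3) by (apply pow_lt; auto).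
    replace (D1 x - D2 x) with ((A1 x ^ 3 * D1 x - A2 x ^ 3 * D2 x) * / A1 x ^ 3 + (A2 x ^ 3 * D2 x) * (/ A1 x ^ 3 - / A2 x ^ 3)) by (field; lra).
    replace (mu1 * A1 x * Z1 x - mu2 * A2 x * Z2 x) with (mu1 * A1 x * (Z1 x - Z2 x) + (mu1 * A1 x - mu2 * A2 x) * Z2 x) by ring.
    apply alg_bound; auto.
    split. apply Rinv_0_lt_compat; auto. auto.
Qed.

Ltac mintac := match goal with
 | |- ?a <= ?a => apply Rle_refl
 | |- Rmin ?a ?b <= ?c => first [ apply Rle_trans with a; [apply Rmin_l | mintac] | apply Rle_trans with b; [apply Rmin_r | mintac] ]
 end.

Definition UC (p0 : R) (F : R -> R -> R) (F0 : R -> R) : Prop :=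
  forall eps, 0 < eps -> exists d, 0 < d /\
    forall h, 0 < Rabs h < d -> forall q, p0 <= q <= 0 -> Rabs (F h q - F0 q) < eps.

Definition Bnd (p0 : R) (F0 : R -> R) : Prop :=
  exists M, 0 <= M /\ forall q, p0 <= q <= 0 -> Rabs (F0 q) <= M.

Lemma Bnd_cont p0 (F0 : R -> R) : p0 <= 0 -> (forall x, continuous F0 x) -> Bnd p0 F0.
Proof.
  intros Hp Hc. destruct (continuity_ab_maj (fun x => Rabs (F0 x)) p0 0) as [M [HM _]]; auto.
  intros c _. apply c_cpt. apply continuous_Rabs_comp. auto.
  exists (Rabs (F0 M)). split. apply Rabs_pos. auto.
Qed.

Lemma posmin p0 (F0 : R -> R) : p0 <= 0 -> (forall x, continuous F0 x) -> (forall q, p0 <= q <= 0 -> 0 < F0 q) ->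
  exists m, 0 < m /\ forall q, p0 <= q <= 0 -> m <= F0 q.
Proof.
  intros Hp Hc Hpos. destruct (continuity_ab_min F0 p0 0) as [x [Hx Hx2]]; auto.
  intros c _. apply c_cpt; auto.
  exists (F0 x). split; auto.
Qed.

Lemma UC_const p0 (F0 : R -> R) : UC p0 (fun _ q => F0 q) F0.
Proof. intros eps He. exists 1. split. lra. intros. rewrite Rminus_diag, Rabs_R0. auto. Qed.

Lemma UC_ext p0 F G F0 d0 : 0 < d0 -> (forall h q, 0 < Rabs h < d0 -> p0 <= q <= 0 -> F h q = G h q) ->
  UC p0 F F0 -> UC p0 G F0.
Proof.
  intros Hd0 He HU eps Heps. destruct (HU eps Heps) as [d [Hd H]].
  exists (Rmin d d0). split. apply Rmin_glb_lt; auto.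
  intros h Hh q Hq. assert (Rmin d d0 <= d) by apply Rmin_l. assert (Rmin d d0 <= d0) by apply Rmin_r.
  rewrite <- He by (auto; lra). apply H; auto. lra.
Qed.

Lemma UC_plus p0 F G F0 G0 : UC p0 F F0 -> UC p0 G G0 -> UC p0 (fun h q => F h q + G h q) (fun q => F0 q + G0 q).
Proof.
  intros HF HG eps He. destruct (HF (eps/2)) as [d1 [Hd1 H1]]. lra. destruct (HG (eps/2)) as [d2 [Hd2 H2]]. lra.
  exists (Rmin d1 d2). split. apply Rmin_glb_lt; auto.
  intros h Hh q Hq. assert (Rmin d1 d2 <= d1) by apply Rmin_l. assert (Rmin d1 d2 <= d2) by apply Rmin_r.
  specialize (H1 h ltac:(lra) q Hq). specialize (H2 h ltac:(lra) q Hq).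
  replace (F h q + G h q - (F0 q + G0 q)) with ((F h q - F0 q) + (G h q - G0 q)) by ring.
  eapply Rle_lt_trans. apply Rabs_triang. lra.
Qed.

Lemma UC_opp p0 F F0 : UC p0 F F0 -> UC p0 (fun h q => - F h q) (fun q => - F0 q).
Proof.
  intros HF eps He. destruct (HF eps He) as [d [Hd H]]. exists d. split; auto.
  intros h Hh q Hq. replace (- F h q - - F0 q) with (- (F h q - F0 q)) by ring. rewrite Rabs_Ropp. auto.
Qed.

Lemma UC_minus p0 F G F0 G0 : UC p0 F F0 -> UC p0 G G0 -> UC p0 (fun h q => F h q - G h q) (fun q => F0 q - G0 q).
Proof. intros. apply (UC_plus p0 F (fun h q => - G h q) F0 (fun q => - G0 q)); auto. apply UC_opp; auto. Qed.

Lemma UC_mult p0 F G F0 G0 : Bnd p0 F0 -> Bnd p0 G0 -> UC p0 F F0 -> UC p0 G G0 ->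
  UC p0 (fun h q => F h q * G h q) (fun q => F0 q * G0 q).
Proof.
  intros [MF [HMF BF]] [MG [HMG BG]] HF HG eps He.
  set (e := Rmin 1 (eps / (2 * (MF + MG + 1)))).
  assert (He0 : 0 < e). { apply Rmin_glb_lt. lra. apply Rdiv_lt_0_compat; lra. }
  assert (He1 : e <= 1) by apply Rmin_l.
  assert (He2 : e <= eps / (2 * (MF + MG + 1))) by apply Rmin_r.
  destruct (HF e He0) as [d1 [Hd1 H1]]. destruct (HG e He0) as [d2 [Hd2 H2]].
  exists (Rmin d1 d2). split. apply Rmin_glb_lt; auto.
  intros h Hh q Hq. assert (Rmin d1 d2 <= d1) by apply Rmin_l. assert (Rmin d1 d2 <= d2) by apply Rmin_r.
  specialize (H1 h ltac:(lra) q Hq). specialize (H2 h ltac:(lra) q Hq).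
  specialize (BF q Hq). specialize (BG q Hq).
  replace (F h q * G h q - F0 q * G0 q) with ((F h q - F0 q) * (G h q - G0 q) + (F h q - F0 q) * G0 q + F0 q * (G h q - G0 q)) by ring.
  assert (T1 : Rabs ((F h q - F0 q) * (G h q - G0 q)) <= e * e).
  { rewrite Rabs_mult. apply Rmult_le_compat; try apply Rabs_pos; lra. }
  assert (T2 : Rabs ((F h q - F0 q) * G0 q) <= e * MG).
  { rewrite Rabs_mult. apply Rmult_le_compat; try apply Rabs_pos; lra. }
  assert (T3 : Rabs (F0 q * (G h q - G0 q)) <= MF * e).
  { rewrite Rabs_mult. apply Rmult_le_compat; try apply Rabs_pos; lra. }
  assert (T : e * e + e * MG + MF * e <= e * (MF + MG + 1)) by nra.
  assert (T' : e * (MF + MG + 1) <= eps / 2).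
  { apply Rle_trans with (eps / (2 * (MF + MG + 1)) * (MF + MG + 1)). apply Rmult_le_compat_r; lra.
    right. field. lra. }
  eapply Rle_lt_trans. apply Rabs_triang. eapply Rle_lt_trans. apply Rplus_le_compat_r. apply Rabs_triang.
  lra.
Qed.

Lemma UC_inv p0 F F0 m : 0 < m -> (forall q, p0 <= q <= 0 -> m <= F0 q) -> UC p0 F F0 ->
  UC p0 (fun h q => / F h q) (fun q => / F0 q).
Proof.
  intros Hm HF0 HF eps He.
  set (e := Rmin (m / 2) (eps * m * m / 4)).
  assert (He0 : 0 < e). { apply Rmin_glb_lt. lra. apply Rdiv_lt_0_compat; [|lra]. apply Rmult_lt_0_compat; [apply Rmult_lt_0_compat|]; lra. }
  assert (He1 : e <= m / 2) by apply Rmin_l.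
  assert (He2 : e <= eps * m * m / 4) by apply Rmin_r.
  destruct (HF e He0) as [d [Hd H]]. exists d. split; auto.
  intros h Hh q Hq. specialize (H h Hh q Hq). specialize (HF0 q Hq).
  apply Rabs_def2 in H. destruct H as [Ha Hb].
  assert (HFh : m / 2 <= F h q) by lra.
  replace (/ F h q - / F0 q) with ((F0 q - F h q) / (F h q * F0 q)) by (field; lra).
  rewrite Rabs_div by (apply Rgt_not_eq; apply Rmult_lt_0_compat; lra).
  rewrite (Rabs_right (F h q * F0 q)) by (left; apply Rmult_lt_0_compat; lra).
  apply (Rmult_lt_reg_r (F h q * F0 q)). apply Rmult_lt_0_compat; lra.
  unfold Rdiv. rewrite Rmult_assoc, Rinv_l, Rmult_1_r by (apply Rgt_not_eq; apply Rmult_lt_0_compat; lra).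
  assert (Rabs (F0 q - F h q) < e) by (apply Rabs_def1; lra).
  assert (m / 2 * m <= F h q * F0 q) by (apply Rmult_le_compat; lra).
  assert (eps * (m / 2 * m) <= eps * (F h q * F0 q)) by (apply Rmult_le_compat_l; lra).
  nra.
Qed.

Lemma Bnd_mult p0 F0 G0 : Bnd p0 F0 -> Bnd p0 G0 -> Bnd p0 (fun q => F0 q * G0 q).
Proof.
  intros [M1 [H1 B1]] [M2 [H2 B2]]. exists (M1 * M2). split. apply Rmult_le_pos; auto.
  intros q Hq. rewrite Rabs_mult. apply Rmult_le_compat; try apply Rabs_pos; auto.
Qed.

Lemma UC_pt p0 F F0 q : UC p0 F F0 -> p0 <= q <= 0 ->
  forall eps, 0 < eps -> exists d, 0 < d /\ forall h, 0 < Rabs h < d -> Rabs (F h q - F0 q) < eps.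
Proof. intros HU Hq eps He. destruct (HU eps He) as [d [Hd H]]. exists d; split; auto. Qed.

Lemma UC_RInt p0 F F0 d0 : p0 < 0 -> 0 < d0 -> (forall h, 0 < Rabs h < d0 -> ex_RInt (F h) p0 0) -> ex_RInt F0 p0 0 -> UC p0 F F0 ->
  forall eps, 0 < eps -> exists d, 0 < d /\ forall h, 0 < Rabs h < d ->
    Rabs (RInt (F h) p0 0 - RInt F0 p0 0) < eps.
Proof.
  intros Hp Hd0 HFi HF0i HU eps He.
  destruct (HU (eps / (2 * (0 - p0)))) as [d [Hd H]]. apply Rdiv_lt_0_compat; lra.
  exists (Rmin d d0). split. apply Rmin_glb_lt; auto. intros h Hh.
  assert (Rmin d d0 <= d) by apply Rmin_l. assert (Rmin d d0 <= d0) by apply Rmin_r.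
  rewrite <- RInt_minus'; auto. 2: apply HFi; lra.
  eapply Rle_lt_trans. apply abs_RInt_le_const. lra. apply (@ex_RInt_minus R_CompleteNormedModule); auto. apply HFi; lra.
  intros t Ht. left. apply H; auto. lra.
  replace ((0 - p0) * (eps / (2 * (0 - p0)))) with (eps / 2) by (field; lra). lra.
Qed.

Lemma sq_bound x y e C : x ^ 2 + y ^ 2 <= e ^ 2 * C -> 0 <= e -> 0 <= C -> Rabs x <= e * sqrt C /\ Rabs y <= e * sqrt C.
Proof.
  intros H He HC. assert (Hs : 0 <= sqrt C) by apply sqrt_pos.
  assert (Hss : sqrt C * sqrt C = C) by (apply sqrt_sqrt; auto).
  assert (0 <= x ^ 2) by apply pow2_ge_0. assert (0 <= y ^ 2) by apply pow2_ge_0.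
  split; apply Rnot_lt_le; intros Hc.
  - assert (0 <= e * sqrt C) by (apply Rmult_le_pos; auto).
    assert ((e * sqrt C) ^ 2 < Rabs x ^ 2) by (simpl; rewrite !Rmult_1_r; assert (0 <= Rabs x) by apply Rabs_pos; assert (0 <= Rabs y) by apply Rabs_pos; nra).
    assert (Rabs x * Rabs x = x ^ 2) by (rewrite <- Rabs_mult; simpl; rewrite Rmult_1_r; apply Rabs_right; apply Rle_ge; apply Rle_0_sqr).
    assert (e * sqrt C * (e * sqrt C) = e ^ 2 * C) by (transitivity (e ^ 2 * (sqrt C * sqrt C)); [ring | rewrite Hss; reflexivity]). lra.
  - assert (0 <= e * sqrt C) by (apply Rmult_le_pos; auto).
    assert ((e * sqrt C) ^ 2 < Rabs y ^ 2) by (simpl; rewrite !Rmult_1_r; assert (0 <= Rabs x) by apply Rabs_pos; assert (0 <= Rabs y) by apply Rabs_pos; nra).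
    assert (Rabs y * Rabs y = y ^ 2) by (rewrite <- Rabs_mult; simpl; rewrite Rmult_1_r; apply Rabs_right; apply Rle_ge; apply Rle_0_sqr).
    assert (e * sqrt C * (e * sqrt C) = e ^ 2 * C) by (transitivity (e ^ 2 * (sqrt C * sqrt C)); [ring | rewrite Hss; reflexivity]). lra.
Qed.

Lemma Bnd_pow p0 F0 n : Bnd p0 F0 -> Bnd p0 (fun q => F0 q ^ n).
Proof.
  intros HB. induction n. exists 1. split. lra. intros; simpl; rewrite Rabs_R1; lra.
  simpl. apply (Bnd_mult p0 F0 (fun q => F0 q ^ n)); auto.
Qed.

Lemma UC_pow p0 F F0 n : Bnd p0 F0 -> UC p0 F F0 -> UC p0 (fun h q => F h q ^ n) (fun q => F0 q ^ n).
Proof.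
  intros HB HU. induction n.
  - simpl. apply (UC_const p0 (fun _ => 1)).
  - simpl. apply (UC_mult p0 F (fun h q => F h q ^ n) F0 (fun q => F0 q ^ n)); auto. apply Bnd_pow; auto.
Qed.

Lemma UC_sol p0 (A : R -> R -> R) (mu : R -> R) (Z D : R -> R -> R) (Ab : R -> R) mub (Zb Db : R -> R) d0 :
  p0 < 0 -> 0 < d0 ->
  (forall h, 0 < Rabs h < d0 -> Sol p0 (A h) (mu h) (Z h) (D h)) ->
  Sol p0 Ab mub Zb Db ->
  UC p0 A Ab ->
  (forall h, Rabs (mu h - mub) <= Rabs h) ->
  forall eps', 0 < eps' -> exists d, 0 < d /\ forall h, 0 < Rabs h < d -> forall q, p0 <= q <= 0 ->
    Rabs (Z h q - Zb q) < eps' /\ Rabs (A h q ^ 3 * D h q - Ab q ^ 3 * Db q) < eps'.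
Proof.
  intros Hp Hd0 HS HSb HUA Hmu eps' Heps'.
  pose proof HSb as (HAb & HAbp & HZb & HDb & _).
  assert (BAb : Bnd p0 Ab) by (apply Bnd_cont; auto; lra).
  assert (UA3 := UC_pow p0 A Ab 3 BAb HUA).
  destruct (posmin p0 (fun q => Ab q ^ 3)) as [m [Hm Hmq]]. lra. intros; cont. intros; apply pow_lt; auto.
  assert (UiA3 := UC_inv p0 _ _ m Hm Hmq UA3). cbv beta in UiA3.
  assert (Umu : UC p0 (fun h _ => mu h) (fun _ => mub)).
  { intros e He. exists e. split; auto. intros h Hh q Hq. eapply Rle_lt_trans. apply Hmu. lra. }
  assert (UmuA : UC p0 (fun h q => mu h * A h q) (fun q => mub * Ab q)).
  { apply (UC_mult p0 (fun h _ => mu h) A (fun _ => mub) Ab); auto. exists (Rabs mub). split. apply Rabs_pos. intros; lra. }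
  destruct (Bnd_cont p0 (fun q => / Ab q ^ 3)) as [BiA [HBiA0 HBiA]]. lra. intros; apply cinv. cont. apply Rgt_not_eq, pow_lt; auto.
  destruct BAb as [BA [HBA0 HBA]].
  destruct (Bnd_cont p0 (fun q => Ab q ^ 3 * Db q)) as [BW [HBW0 HBW]]. lra. intros; cont.
  destruct (Bnd_cont p0 Zb) as [BZ [HBZ0 HBZ]]. lra. auto.
  set (Ki := BiA + 1). set (KA := BA + 1). set (Km := Rabs mub + 1). set (Ks := BW + BZ).
  assert (HKm : 0 <= Km) by (unfold Km; assert (0 <= Rabs mub) by apply Rabs_pos; lra).
  set (K := Ki + Km * KA + 1).
  assert (HK : 0 < K) by (unfold K, Ki, KA; assert (0 <= Km * (BA + 1)) by (apply Rmult_le_pos; lra); lra).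
  set (C := (1 + 2 * Ks ^ 2 / K) * exp (K * (0 - p0))).
  assert (HC : 0 <= C).
  { unfold C. apply Rmult_le_pos. assert (0 <= 2 * Ks ^ 2 / K). apply Rmult_le_pos. apply Rmult_le_pos. lra. apply pow2_ge_0. left; apply Rinv_0_lt_compat; auto. lra. left; apply exp_pos. }
  assert (Hs : 0 <= sqrt C) by apply sqrt_pos.
  set (e := eps' / (2 * (sqrt C + 1))).
  assert (He : 0 < e) by (unfold e; apply Rdiv_lt_0_compat; lra).
  assert (HeC : e * sqrt C < eps').
  { unfold e. apply (Rmult_lt_reg_r (2 * (sqrt C + 1))). lra.
    replace (eps' / (2 * (sqrt C + 1)) * sqrt C * (2 * (sqrt C + 1))) with (eps' * sqrt C) by (field; lra). nra. }
  destruct (UiA3 (Rmin e 1)) as [d1 [Hd1 H1]]. apply Rmin_glb_lt; lra.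
  destruct (UmuA e He) as [d2 [Hd2 H2]].
  destruct (HUA 1) as [d3 [Hd3 H3]]. lra.
  destruct (UA3 e He) as [d4 [Hd4 H4]].
  set (d := Rmin (Rmin d0 1) (Rmin (Rmin d1 d2) (Rmin d3 d4))).
  assert (Hd : 0 < d) by (unfold d; repeat apply Rmin_glb_lt; lra).
  exists d. split; auto. intros h Hh q Hq.
  assert (Hdd : d <= d0 /\ d <= 1 /\ d <= d1 /\ d <= d2 /\ d <= d3 /\ d <= d4).
  { unfold d. repeat split; mintac. }
  destruct Hdd as (Q0 & Q1 & Q2 & Q3 & Q4 & Q5).
  assert (Hh0 : 0 < Rabs h < d0) by lra.
  assert (HSh := HS h Hh0).
  assert (Hmin1 : Rmin e 1 <= e) by apply Rmin_l. assert (Hmin2 : Rmin e 1 <= 1) by apply Rmin_r.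
  assert (E := est p0 (A h) (mu h) (Z h) (D h) Ab mub Zb Db Ki KA Km Ks e Hp HSh HSb).
  assert (Ebound : forall q, p0 <= q <= 0 -> (Z h q - Zb q) ^ 2 + (A h q ^ 3 * D h q - Ab q ^ 3 * Db q) ^ 2 <= e ^ 2 * C).
  { intros q' Hq'. apply E; auto; try (unfold Ki; lra); try (unfold KA; lra); try (unfold Ks; lra); try lra.
    - intros r Hr. specialize (H1 h ltac:(lra) r Hr). specialize (H2 h ltac:(lra) r Hr).
      specialize (H3 h ltac:(lra) r Hr). specialize (HBiA r Hr). specialize (HBA r Hr).
      specialize (HBW r Hr). specialize (HBZ r Hr).
      apply Rabs_def2 in H3. apply Rabs_le_between in HBiA. apply Rabs_le_between in HBA.
      repeat split.
      + assert (Rabs (/ A h r ^ 3 - / Ab r ^ 3) < 1) by lra. apply Rabs_def2 in H. unfold Ki; lra.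
      + unfold KA; lra.
      + unfold Ks; lra.
      + unfold Ks; lra.
      + lra.
      + lra.
    - specialize (Hmu h). unfold Km. assert (Rabs (mu h) - Rabs mub <= Rabs (mu h - mub)) by apply Rabs_triang_inv. lra.
    - left. apply H4. lra. lra. }
  destruct (sq_bound _ _ e C (Ebound q Hq)) as [B1 B2]. lra. lra.
  split; lra.
Qed.

Ltac uc := repeat match goal with
 | |- UC _ (fun h q => @?c q) _ => apply UC_const
 | |- UC _ (fun h q => _ + _) _ => apply UC_plus
 | |- UC _ (fun h q => _ * _) _ => apply UC_mult
 | |- UC _ (fun h q => _ ^ _) _ => apply UC_pow
 | |- Bnd _ _ => apply Bnd_cont; [lra | intros; cont]
 end.

Lemma UC_ext0 p0 F F0 G0 : (forall q, p0 <= q <= 0 -> F0 q = G0 q) -> UC p0 F F0 -> UC p0 F G0.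
Proof.
  intros He HU eps Heps. destruct (HU eps Heps) as [d [Hd H]]. exists d; split; auto.
  intros h Hh q Hq. rewrite <- He; auto.
Qed.

Lemma UC_A p0 (A : R -> R -> R) (Ab : R -> R) m d0 : 0 < m -> 0 < d0 ->
  (forall q, p0 <= q <= 0 -> m <= Ab q) ->
  (forall h q, 0 < Rabs h < d0 -> p0 <= q <= 0 -> 0 < A h q /\ A h q ^ 2 = Ab q ^ 2 + h) ->
  UC p0 A Ab.
Proof.
  intros Hm Hd0 Hmq HA eps He. exists (Rmin d0 (eps * m)). split.
  apply Rmin_glb_lt; auto. apply Rmult_lt_0_compat; auto.
  intros h Hh q Hq. assert (Rmin d0 (eps * m) <= d0) by apply Rmin_l.
  assert (Rmin d0 (eps * m) <= eps * m) by apply Rmin_r.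
  destruct (HA h q ltac:(lra) Hq) as [H1 H2]. specialize (Hmq q Hq).
  replace (A h q - Ab q) with (h / (A h q + Ab q)).
  2: { apply (Rmult_eq_reg_r (A h q + Ab q)). 2: lra. unfold Rdiv. rewrite Rmult_assoc, Rinv_l by lra.
       simpl in H2. nra. }
  rewrite Rabs_div by lra. rewrite (Rabs_right (A h q + Ab q)) by lra.
  apply (Rmult_lt_reg_r (A h q + Ab q)). lra. unfold Rdiv. rewrite Rmult_assoc, Rinv_l, Rmult_1_r by lra.
  nra.
Qed.

Lemma derivable_pt_lim_intro (f : R -> R) x l :
  (forall eps, 0 < eps -> exists d, 0 < d /\ forall h, 0 < Rabs h < d -> Rabs ((f (x + h) - f x) / h - l) < eps) ->
  derivable_pt_lim f x l.
Proof.
  intros H eps He. destruct (H eps He) as [d [Hd H']]. exists (mkposreal d Hd). intros h Hh Hhd.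
  apply H'. split; auto. apply Rabs_pos_lt; auto.
Qed.

Lemma main_mu p0 g sigma mb (A0 : R -> R) (Zm Dm : R -> R -> R) (Xm : R -> R) :
  p0 < 0 -> 0 < g -> 0 < sigma -> 0 < mb ->
  (forall mu, Sol p0 A0 mu (Zm mu) (Dm mu)) ->
  (forall mu, Xm mu = A0 0 ^ 3 * Dm mu 0 - (g + sigma * mu) * Zm mu 0) ->
  Xm mb = 0 ->
  RInt (fun q => / A0 q ^ 3) p0 0 <= / g ->
  exists d, derivable_pt_lim Xm mb d /\ d < 0.
Proof.
  intros Hp Hg Hs Hmb HS HX HX0 HI.
  pose proof (HS mb) as HSb. pose proof HSb as (HA & HAp & HZb & HDb & _).
  set (Zb0 := Zm mb 0).
  assert (HZb0 : 0 < Zb0) by (apply (Z0_pos p0 A0 mb (Zm mb) (Dm mb)); auto; lra).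
  assert (HXb : A0 0 ^ 3 * Dm mb 0 = (g + sigma * mb) * Zm mb 0) by (rewrite HX in HX0; lra).
  assert (HN := Nmu_neg p0 A0 mb (Zm mb) (Dm mb) g sigma Hp Hmb Hg HSb HXb HI).
  set (N := RInt (fun q => A0 q * Zm mb q ^ 2) p0 0 - sigma * Zm mb 0 ^ 2) in HN.
  exists (N / Zb0). split.
  2: { apply Rmult_neg_pos. 2: apply Rinv_0_lt_compat; auto. auto. }
  assert (Hkey : forall h, h <> 0 -> (Xm (mb + h) - Xm mb) / h =
     (RInt (fun q => A0 q * Zm (mb + h) q * Zm mb q) p0 0 - sigma * Zm (mb + h) 0 * Zb0) / Zb0).
  { intros h Hh. pose proof (HS (mb + h)) as HSh. pose proof HSh as (_ & _ & HZh & HDh & _).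
    assert (Gr := green p0 A0 (mb + h) (Zm (mb + h)) (Dm (mb + h)) A0 mb (Zm mb) (Dm mb) Hp HSh HSb).
    rewrite (RInt_ext' _ (fun q => h * (A0 q * Zm (mb + h) q * Zm mb q))) in Gr by (intros; ring).
    rewrite RInt_scal' in Gr by (apply exR; intros; cont).
    rewrite HX0, HX. fold Zb0 in Gr |- *.
    apply (Rmult_eq_reg_r (h * Zb0)). 2: apply Rmult_integral_contrapositive; split; lra.
    field_simplify; try lra.
    rewrite HXb in Gr. fold Zb0 in Gr. unfold Rminus. 
    set (IR := RInt (fun q => A0 q * Zm (mb + h) q * Zm mb q) p0 0) in *.
    set (D1 := Dm (mb + h) 0) in *. set (Z1 := Zm (mb + h) 0) in *.
    nra. }
  assert (UZ : UC p0 (fun h => Zm (mb + h)) (Zm mb)).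
  { intros e He'.
    assert (HUc : UC p0 (fun _ => A0) A0) by (intros e0 He0; exists 1; split; [lra|]; intros; rewrite Rminus_diag, Rabs_R0; lra).
    assert (Hmu : forall h, Rabs (mb + h - mb) <= Rabs h) by (intros h; replace (mb + h - mb) with h by ring; lra).
    destruct (UC_sol p0 (fun _ => A0) (fun h => mb + h) (fun h => Zm (mb + h)) (fun h => Dm (mb + h)) A0 mb (Zm mb) (Dm mb) 1 Hp ltac:(lra)
      (fun h _ => HS (mb + h)) HSb HUc Hmu e He') as [d [Hd H]].
    exists d. split; auto. intros h Hh q Hq. apply (H h Hh q Hq). }
  assert (UF : UC p0 (fun h q => A0 q * Zm (mb + h) q * Zm mb q) (fun q => A0 q * Zm mb q * Zm mb q)).
  { uc. exact UZ. }
  apply derivable_pt_lim_intro. intros eps He.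
  destruct (UC_RInt p0 (fun h q => A0 q * Zm (mb + h) q * Zm mb q) (fun q => A0 q * Zm mb q * Zm mb q) 1 Hp ltac:(lra)) with (eps := eps * Zb0 / 2) as [d1 [Hd1 H1]].
  { intros h _. apply exR. intros x. pose proof (HS (mb + h)) as (_ & _ & HZh & _). cont. }
  { apply exR. intros x. cont. }
  { exact UF. }
  { apply Rmult_lt_0_compat. apply Rmult_lt_0_compat; auto. lra. }
  destruct (UC_pt p0 _ _ 0 UZ ltac:(lra) (eps / (2 * sigma))) as [d2 [Hd2 H2]].
  { apply Rdiv_lt_0_compat; lra. }
  exists (Rmin d1 d2). split. apply Rmin_glb_lt; auto.
  intros h Hh. assert (Rmin d1 d2 <= d1) by apply Rmin_l. assert (Rmin d1 d2 <= d2) by apply Rmin_r.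
  rewrite Hkey by (intro E; rewrite E, Rabs_R0 in Hh; lra).
  specialize (H1 h ltac:(lra)). specialize (H2 h ltac:(lra)). cbv beta in H1, H2.
  unfold N. rewrite (RInt_ext' (fun q => A0 q * Zm mb q ^ 2) (fun q => A0 q * Zm mb q * Zm mb q)) by (intros; ring).
  set (I1 := RInt (fun q => A0 q * Zm (mb + h) q * Zm mb q) p0 0) in *.
  set (I0 := RInt (fun q => A0 q * Zm mb q * Zm mb q) p0 0) in *.
  set (Z1 := Zm (mb + h) 0) in *. fold Zb0 in H2 |- *.
  replace ((I1 - sigma * Z1 * Zb0) / Zb0 - (I0 - sigma * Zb0 ^ 2) / Zb0) with
    ((I1 - I0) / Zb0 - sigma * (Z1 - Zb0)) by (field; lra).
  eapply Rle_lt_trans. apply Rabs_triang. rewrite Rabs_Ropp, Rabs_mult, (Rabs_right sigma) by lra.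
  rewrite Rabs_div by lra. rewrite (Rabs_right Zb0) by lra.
  assert (Rabs (I1 - I0) / Zb0 < eps / 2).
  { apply (Rmult_lt_reg_r Zb0); auto. unfold Rdiv. rewrite Rmult_assoc, Rinv_l by lra. lra. }
  assert (sigma * Rabs (Z1 - Zb0) < eps / 2).
  { apply (Rmult_lt_compat_l sigma) in H2; auto. replace (sigma * (eps / (2 * sigma))) with (eps / 2) in H2 by (field; lra). lra. }
  lra.
Qed.

Lemma main_lam p0 g sigma mb lb (Al : R -> R -> R) (Zl Dl : R -> R -> R) (Xl : R -> R) d0 :
  p0 < 0 -> 0 < g -> 0 < sigma -> 0 < mb -> 0 < d0 ->
  (forall l, Rabs (l - lb) < d0 -> Sol p0 (Al l) mb (Zl l) (Dl l)) ->
  (forall l x, Rabs (l - lb) < d0 -> Al l x ^ 2 = Al lb x ^ 2 + (l - lb)) ->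
  (forall l, Rabs (l - lb) < d0 -> Xl l = Al l 0 ^ 3 * Dl l 0 - (g + sigma * mb) * Zl l 0) ->
  Xl lb = 0 ->
  exists d, derivable_pt_lim Xl lb d /\ 0 < d.
Proof.
  intros Hp Hg Hs Hmb Hd0 HS Hsq HX HX0.
  assert (Hlb : Rabs (lb - lb) < d0) by (rewrite Rminus_diag, Rabs_R0; lra).
  pose proof (HS lb Hlb) as HSb. pose proof HSb as (HAb & HAbp & HZb & HDb & _).
  assert (HXb : Al lb 0 ^ 3 * Dl lb 0 = (g + sigma * mb) * Zl lb 0) by (rewrite (HX lb Hlb) in HX0; lra).
  set (Ab := Al lb) in *. set (Zb := Zl lb) in *. set (Db := Dl lb) in *.
  set (Zb0 := Zb 0).
  assert (HZb0 : 0 < Zb0) by (apply (Z0_pos p0 Ab mb Zb Db); auto; lra).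
  assert (HSh : forall h, 0 < Rabs h < d0 -> Sol p0 (Al (lb + h)) mb (Zl (lb + h)) (Dl (lb + h))).
  { intros h Hh. apply HS. replace (lb + h - lb) with h by ring. lra. }
  assert (Hsqh : forall h x, 0 < Rabs h < d0 -> Al (lb + h) x ^ 2 = Ab x ^ 2 + h).
  { intros h x Hh. rewrite Hsq. unfold Ab. f_equal. ring. replace (lb + h - lb) with h by ring. lra. }
  set (Fh := fun h q => mb * Zl (lb + h) q * Zb q * / (Al (lb + h) q + Ab q) +
      (Al (lb + h) q ^ 2 + Al (lb + h) q * Ab q + Ab q ^ 2) * / (Al (lb + h) q + Ab q) * Dl (lb + h) q * Db q).
  set (F0 := fun q => mb * Zb q * Zb q * / (Ab q + Ab q) +
      (Ab q ^ 2 + Ab q * Ab q + Ab q ^ 2) * / (Ab q + Ab q) * Db q * Db q).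
  assert (Hkey : forall h, 0 < Rabs h < d0 -> (Xl (lb + h) - Xl lb) / h = RInt (Fh h) p0 0 / Zb0).
  { intros h Hh. pose proof (HSh h Hh) as HS1. pose proof HS1 as (HA1 & HA1p & HZ1 & HD1 & _).
    assert (Hh0 : h <> 0) by (intro E; rewrite E, Rabs_R0 in Hh; lra).
    assert (Gr := green p0 (Al (lb + h)) mb (Zl (lb + h)) (Dl (lb + h)) Ab mb Zb Db Hp HS1 HSb).
    rewrite (RInt_ext' _ (fun q => h * Fh h q)) in Gr.
    2: { intros q. unfold Fh. cbv beta. assert (E := Hsqh h q Hh). assert (0 < Al (lb + h) q) by auto. assert (0 < Ab q) by auto.
         set (A1 := Al (lb + h) q) in *. set (Z1 := Zl (lb + h) q). set (D1 := Dl (lb + h) q).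
         clearbody A1 Z1 D1. assert (Eh : h = A1 ^ 2 - Ab q ^ 2) by lra. rewrite Eh. field. lra. }
    rewrite RInt_scal' in Gr.
    2: { apply exR. intros x. unfold Fh. cont. apply Rgt_not_eq. specialize (HA1p x). specialize (HAbp x). lra.
         apply Rgt_not_eq. specialize (HA1p x). specialize (HAbp x). lra. }
    rewrite HX0, HX by (replace (lb + h - lb) with h by ring; lra).
    fold Zb0 in Gr |- *. rewrite HXb in Gr. fold Zb0 in Gr.
    apply (Rmult_eq_reg_r (h * Zb0)). 2: apply Rmult_integral_contrapositive; split; lra.
    set (IR := RInt (Fh h) p0 0) in *.
    set (D1 := Dl (lb + h) 0) in *. set (Z1 := Zl (lb + h) 0) in *. set (A10 := Al (lb + h) 0) in *.
    field_simplify; try lra; nra. }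
  destruct (posmin p0 Ab) as [m [Hm Hmq]]. lra. auto. intros; auto.
  assert (UA : UC p0 (fun h => Al (lb + h)) Ab).
  { apply (UC_A p0 _ Ab m d0); auto. intros h q Hh Hq. split. pose proof (HSh h Hh) as (_ & HA1p & _). auto. auto. }
  assert (Hmu : forall h : R, Rabs (mb - mb) <= Rabs h) by (intros; rewrite Rminus_diag, Rabs_R0; apply Rabs_pos).
  assert (HUS := UC_sol p0 (fun h => Al (lb + h)) (fun _ => mb) (fun h => Zl (lb + h)) (fun h => Dl (lb + h)) Ab mb Zb Db d0 Hp Hd0 HSh HSb UA Hmu).
  assert (UZ : UC p0 (fun h => Zl (lb + h)) Zb).
  { intros e He. destruct (HUS e He) as [d [Hd H]]. exists d. split; auto. intros h Hh q Hq. apply (H h Hh q Hq). }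
  assert (UW : UC p0 (fun h q => Al (lb + h) q ^ 3 * Dl (lb + h) q) (fun q => Ab q ^ 3 * Db q)).
  { intros e He. destruct (HUS e He) as [d [Hd H]]. exists d. split; auto. intros h Hh q Hq. apply (H h Hh q Hq). }
  assert (BAb : Bnd p0 Ab) by (apply Bnd_cont; auto; lra).
  assert (UiA3 : UC p0 (fun h q => / Al (lb + h) q ^ 3) (fun q => / Ab q ^ 3)).
  { apply (UC_inv p0 (fun h q => Al (lb + h) q ^ 3) (fun q => Ab q ^ 3) (m ^ 3)). apply pow_lt; auto.
    intros q Hq. apply pow_incr. split. lra. auto. apply UC_pow; auto. }
  assert (UD : UC p0 (fun h => Dl (lb + h)) Db).
  { apply (UC_ext0 p0 _ (fun q => Ab q ^ 3 * Db q * / Ab q ^ 3)).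
    intros q Hq. field. apply Rgt_not_eq, HAbp.
    apply (UC_ext p0 (fun h q => Al (lb + h) q ^ 3 * Dl (lb + h) q * / Al (lb + h) q ^ 3) _ _ d0); auto.
    intros h q Hh Hq. pose proof (HSh h Hh) as (_ & HA1p & _). field. apply Rgt_not_eq, HA1p.
    apply UC_mult; auto. apply Bnd_cont. lra. intros; cont. apply Bnd_cont. lra. intros; cont. apply Rgt_not_eq, pow_lt; auto. }
  assert (Uinv : UC p0 (fun h q => / (Al (lb + h) q + Ab q)) (fun q => / (Ab q + Ab q))).
  { apply (UC_inv p0 (fun h q => Al (lb + h) q + Ab q) (fun q => Ab q + Ab q) (2 * m)). lra.
    intros q Hq. specialize (Hmq q Hq). lra. apply UC_plus; auto. apply (UC_const p0 Ab). }
  assert (UF : UC p0 Fh F0).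
  { unfold Fh, F0. uc.
    all: try exact UZ. all: try exact UD. all: try exact UA. all: try exact Uinv.
    all: try (apply Rgt_not_eq; specialize (HAbp x); lra).
    all: idtac. }
  assert (HF0c : forall x, continuous F0 x).
  { intros x. unfold F0. cont. all: apply Rgt_not_eq; specialize (HAbp x); lra. }
  exists (RInt F0 p0 0 / Zb0). split.
  2: { apply Rdiv_lt_0_compat; auto. apply (RInt_pos_pt F0 p0 0 0). lra. exact HF0c.
       - intros q Hq. unfold F0. specialize (HAbp q).
         assert (0 < / (Ab q + Ab q)) by (apply Rinv_0_lt_compat; lra).
         assert (0 <= Zb q * Zb q) by apply Rle_0_sqr. assert (0 <= Db q * Db q) by apply Rle_0_sqr.
         assert (0 <= Ab q ^ 2 + Ab q * Ab q + Ab q ^ 2) by (simpl; nra).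
         apply Rplus_le_le_0_compat.
         + replace (mb * Zb q * Zb q * / (Ab q + Ab q)) with (mb * (Zb q * Zb q) * / (Ab q + Ab q)) by ring.
           apply Rmult_le_pos; [apply Rmult_le_pos|]; lra.
         + replace ((Ab q ^ 2 + Ab q * Ab q + Ab q ^ 2) * / (Ab q + Ab q) * Db q * Db q) with
             ((Ab q ^ 2 + Ab q * Ab q + Ab q ^ 2) * / (Ab q + Ab q) * (Db q * Db q)) by ring.
           apply Rmult_le_pos; [apply Rmult_le_pos|]; lra.
       - lra.
       - unfold F0. specialize (HAbp 0).
         assert (0 < / (Ab 0 + Ab 0)) by (apply Rinv_0_lt_compat; lra).
         assert (0 <= Db 0 * Db 0) by apply Rle_0_sqr.
         assert (0 < Ab 0 ^ 2 + Ab 0 * Ab 0 + Ab 0 ^ 2) by (simpl; nra).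
         fold Zb0.
         apply Rplus_lt_le_0_compat.
         + replace (mb * Zb0 * Zb0 * / (Ab 0 + Ab 0)) with (mb * (Zb0 * Zb0) * / (Ab 0 + Ab 0)) by ring.
           apply Rmult_lt_0_compat; [apply Rmult_lt_0_compat|]; nra.
         + replace ((Ab 0 ^ 2 + Ab 0 * Ab 0 + Ab 0 ^ 2) * / (Ab 0 + Ab 0) * Db 0 * Db 0) with
             ((Ab 0 ^ 2 + Ab 0 * Ab 0 + Ab 0 ^ 2) * / (Ab 0 + Ab 0) * (Db 0 * Db 0)) by ring.
           apply Rmult_le_pos; [apply Rmult_le_pos|]; lra. }
  apply derivable_pt_lim_intro. intros eps He.
  destruct (UC_RInt p0 Fh F0 d0 Hp Hd0) with (eps := eps * Zb0) as [d1 [Hd1 H1]].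
  { intros h Hh. pose proof (HSh h Hh) as (HA1 & HA1p & HZ1 & HD1 & _). apply exR. intros x. unfold Fh. cont.
    all: apply Rgt_not_eq; specialize (HAbp x); specialize (HA1p x); lra. }
  { apply exR; auto. }
  { exact UF. }
  { apply Rmult_lt_0_compat; auto. }
  exists (Rmin d1 d0). split. apply Rmin_glb_lt; auto.
  intros h Hh. assert (Rmin d1 d0 <= d1) by apply Rmin_l. assert (Rmin d1 d0 <= d0) by apply Rmin_r.
  rewrite Hkey by lra.
  specialize (H1 h ltac:(lra)).
  replace (RInt (Fh h) p0 0 / Zb0 - RInt F0 p0 0 / Zb0) with ((RInt (Fh h) p0 0 - RInt F0 p0 0) / Zb0) by (field; lra).
  rewrite Rabs_div by lra. rewrite (Rabs_right Zb0) by lra.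
  apply (Rmult_lt_reg_r Zb0); auto. unfold Rdiv. rewrite Rmult_assoc, Rinv_l by lra. lra.
Qed.

Definition clamp (a b x : R) := Rmax a (Rmin b x).

Lemma clamp_in a b x : a <= b -> a <= clamp a b x <= b.
Proof. intros H. unfold clamp. split. apply Rmax_l. apply Rmax_lub. lra. apply Rmin_l. Qed.

Lemma clamp_id a b x : a <= x <= b -> clamp a b x = x.
Proof. intros H. unfold clamp. rewrite Rmin_right by lra. rewrite Rmax_right by lra. auto. Qed.

Lemma clamp_lip a b x y : a <= b -> Rabs (clamp a b x - clamp a b y) <= Rabs (x - y).
Proof.
  intros H. unfold clamp.
  destruct (Rle_dec b x), (Rle_dec b y), (Rle_dec x a), (Rle_dec y a);
  repeat first [ rewrite (Rmin_left b x) by lra | rewrite (Rmin_right b x) by lra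
               | rewrite (Rmin_left b y) by lra | rewrite (Rmin_right b y) by lra ];
  repeat first [ rewrite (Rmax_left a b) by lra | rewrite (Rmax_right a b) by lra
               | rewrite (Rmax_left a x) by lra | rewrite (Rmax_right a x) by lra
               | rewrite (Rmax_left a y) by lra | rewrite (Rmax_right a y) by lra ];
  apply Rabs_le; split_Rabs; lra.
Qed.

Lemma eps_cont (f : R -> R) x : (forall eps, 0 < eps -> exists d, 0 < d /\ forall y, Rabs (y - x) < d -> Rabs (f y - f x) < eps) ->
  continuous f x.
Proof.
  intros H. apply cpt_c. intros eps He. destruct (H eps He) as [d [Hd H']].
  exists d. split; auto. intros y [_ Hy]. apply H'. exact Hy.
Qed.

Lemma clamp_loc a b x : a < x < b -> locally x (fun t => clamp a b t = t).
Proof.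
  intros Hx. apply (loc_ball _ x (Rmin (x - a) (b - x))). apply Rmin_glb_lt; lra.
  intros y Hy. assert (Rmin (x - a) (b - x) <= x - a) by apply Rmin_l.
  assert (Rmin (x - a) (b - x) <= b - x) by apply Rmin_r. apply Rabs_def2 in Hy.
  apply clamp_id. lra.
Qed.

Lemma lim_clamp a b (f : R -> R) : a <= b ->
  (forall p, a <= p <= b -> limit1_in f (fun x => a <= x <= b) (f p) p) ->
  forall x, continuous (fun t => f (clamp a b t)) x.
Proof.
  intros Hab H x. apply eps_cont. intros eps He.
  destruct (H (clamp a b x) (clamp_in a b x Hab) eps He) as [d [Hd H']].
  exists d. split; auto. intros y Hy.
  destruct (Req_dec (clamp a b y) (clamp a b x)) as [E|NE].
  - rewrite E, Rminus_diag, Rabs_R0; auto.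
  - apply (H' (clamp a b y)). split. apply clamp_in; auto.
    unfold R_dist. eapply Rle_lt_trans. apply clamp_lip; auto. auto.
Qed.

Lemma holder_cont alpha (f : R -> R) a b : 0 < alpha -> a <= b -> holder alpha f a b ->
  forall x, continuous (fun t => f (clamp a b t)) x.
Proof.
  intros Ha Hab [C HC] x. apply eps_cont. intros eps He.
  set (C' := Rabs C).
  assert (HC' : 0 <= C') by apply Rabs_pos.
  set (d := Rpower (eps / (C' + 1)) (/ alpha)).
  assert (Hd : 0 < d) by (unfold d, Rpower; apply exp_pos).
  assert (Hdd : Rpower d alpha = eps / (C' + 1)).
  { unfold d. rewrite Rpower_mult. rewrite Rinv_l by lra. apply Rpower_1. apply Rdiv_lt_0_compat; lra. }
  exists d. split; auto. intros y Hy.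
  destruct (Req_dec (clamp a b y) (clamp a b x)) as [E|NE].
  - rewrite E, Rminus_diag, Rabs_R0; auto.
  - assert (H1 := HC (clamp a b y) (clamp a b x) (clamp_in a b y Hab) (clamp_in a b x Hab)).
    assert (Hpos : 0 < Rabs (clamp a b y - clamp a b x)) by (apply Rabs_pos_lt; lra).
    assert (Hl := clamp_lip a b y x Hab).
    assert (H2 : Rpower (Rabs (clamp a b y - clamp a b x)) alpha < Rpower d alpha).
    { apply Rlt_Rpower_l; auto. split; auto. lra. }
    rewrite Hdd in H2.
    assert (H3 : 0 < Rpower (Rabs (clamp a b y - clamp a b x)) alpha) by (unfold Rpower; apply exp_pos).
    assert (C <= C') by apply Rle_abs.
    apply Rle_lt_trans with (C' * Rpower (Rabs (clamp a b y - clamp a b x)) alpha).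
    eapply Rle_trans. apply H1. apply Rmult_le_compat_r; lra.
    apply Rle_lt_trans with (C' * (eps / (C' + 1))). apply Rmult_le_compat_l; lra.
    replace (C' * (eps / (C' + 1))) with (eps * (C' / (C' + 1))) by (field; lra).
    assert (C' / (C' + 1) < 1). { apply (Rmult_lt_reg_r (C' + 1)). lra. unfold Rdiv. rewrite Rmult_assoc, Rinv_l by lra. lra. }
    nra.
Qed.

Lemma ex_sub (f : R -> R) lo hi a b : ex_RInt f lo hi -> lo <= a <= hi -> lo <= b <= hi -> ex_RInt f a b.
Proof.
  intros H Ha Hb.
  assert (H1 : ex_RInt f lo a) by (apply (ex_RInt_Chasles_1 f lo a hi); auto; lra).
  assert (H2 : ex_RInt f lo b) by (apply (ex_RInt_Chasles_1 f lo b hi); auto; lra).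
  apply (ex_RInt_Chasles f a lo b). apply ex_RInt_swap; auto. auto.
Qed.

Lemma bnd_ab (f : R -> R) a b : a <= b -> (forall x, continuous f x) -> exists M, 0 <= M /\ forall x, a <= x <= b -> Rabs (f x) <= M.
Proof.
  intros Hab Hc. destruct (continuity_ab_maj (fun x => Rabs (f x)) a b) as [M [HM _]]; auto.
  intros c _. apply c_cpt. apply continuous_Rabs_comp. auto.
  exists (Rabs (f M)). split. apply Rabs_pos. auto.
Qed.

Lemma gam_int p0 p1 g1 g2 alpha : p0 < p1 -> p1 < 0 -> 0 < alpha -> holder alpha g1 p0 p1 -> holder alpha g2 p1 0 ->
  ex_RInt (gam p1 g1 g2) p0 0 /\ exists M, 0 <= M /\ forall x, p0 <= x <= 0 -> Rabs (gam p1 g1 g2 x) <= M.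
Proof.
  intros H01 H1 Ha Hg1 Hg2.
  assert (C1 := holder_cont alpha g1 p0 p1 Ha ltac:(lra) Hg1).
  assert (C2 := holder_cont alpha g2 p1 0 Ha ltac:(lra) Hg2).
  split.
  - apply (ex_RInt_Chasles _ p0 p1 0).
    + apply (ex_RInt_ext (fun t => g1 (clamp p0 p1 t))). 
      intros x Hx. rewrite Rmin_left in Hx by lra. rewrite Rmax_right in Hx by lra.
      unfold gam. destruct (Rlt_dec x p1). rewrite clamp_id; auto; lra. lra.
      apply exR; auto.
    + apply (ex_RInt_ext (fun t => g2 (clamp p1 0 t))). 
      intros x Hx. rewrite Rmin_left in Hx by lra. rewrite Rmax_right in Hx by lra.
      unfold gam. destruct (Rlt_dec x p1). lra. rewrite clamp_id; auto; lra.
      apply exR; auto.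
  - destruct (bnd_ab _ p0 p1 ltac:(lra) C1) as [M1 [HM1 B1]].
    destruct (bnd_ab _ p1 0 ltac:(lra) C2) as [M2 [HM2 B2]].
    exists (M1 + M2). split. lra. intros x Hx. unfold gam. destruct (Rlt_dec x p1).
    + specialize (B1 x ltac:(lra)). rewrite clamp_id in B1 by lra. lra.
    + specialize (B2 x ltac:(lra)). rewrite clamp_id in B2 by lra. lra.
Qed.

Lemma RInt_lip (f : R -> R) lo hi M a b : ex_RInt f lo hi -> (forall x, lo <= x <= hi -> Rabs (f x) <= M) ->
  lo <= a <= hi -> lo <= b <= hi -> Rabs (RInt f a b) <= M * Rabs (b - a).
Proof.
  intros Hi HM Ha Hb. destruct (Rle_dec a b).
  - rewrite (Rabs_right (b - a)) by lra. rewrite Rmult_comm. apply abs_RInt_le_const; auto. apply (ex_sub f lo hi); auto.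
    intros; apply HM; lra.
  - rewrite <- opp_RInt_swap by (apply (ex_sub f lo hi); auto). unfold opp; simpl. rewrite Rabs_Ropp.
    rewrite (Rabs_left (b - a)) by lra. replace (- (b - a)) with (a - b) by ring. rewrite Rmult_comm.
    apply abs_RInt_le_const. lra. apply (ex_sub f lo hi); auto. intros; apply HM; lra.
Qed.

Lemma Gam_eq p0 p1 g1 g2 p : ex_RInt (gam p1 g1 g2) p0 0 -> p0 <= p <= 0 ->
  Gam p1 g1 g2 p = RInt (gam p1 g1 g2) 0 p.
Proof. intros Hi Hp. unfold Gam. apply RInt_defs. apply (ex_sub _ p0 0); auto; lra. Qed.

Lemma Gam_lip p0 p1 g1 g2 M p q : ex_RInt (gam p1 g1 g2) p0 0 -> (forall x, p0 <= x <= 0 -> Rabs (gam p1 g1 g2 x) <= M) ->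
  p0 <= p <= 0 -> p0 <= q <= 0 -> Rabs (Gam p1 g1 g2 p - Gam p1 g1 g2 q) <= M * Rabs (p - q).
Proof.
  intros Hi HM Hp Hq. rewrite !(Gam_eq p0) by auto.
  rewrite <- (RInt_Chasles (gam p1 g1 g2) 0 q p) by (apply (ex_sub _ p0 0); auto; lra).
  unfold plus; simpl. rewrite (Rplus_comm (RInt (gam p1 g1 g2) 0 q)). unfold Rminus. rewrite Rplus_assoc, Rplus_opp_r, Rplus_0_r.
  apply (RInt_lip _ p0 0); auto.
Qed.

Lemma Gam0 p1 g1 g2 : Gam p1 g1 g2 0 = 0.
Proof. unfold Gam. rewrite RInt_defs by apply ex_RInt_point. rewrite RInt_point. reflexivity. Qed.

Lemma Acl_props p0 p1 g1 g2 M lam : p0 < 0 -> ex_RInt (gam p1 g1 g2) p0 0 ->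
  (forall x, p0 <= x <= 0 -> Rabs (gam p1 g1 g2 x) <= M) -> 0 <= M ->
  admissible p0 p1 g1 g2 lam ->
  (forall x, continuous (fun t => aa p1 g1 g2 lam (clamp p0 0 t)) x) /\
  (forall x, 0 < aa p1 g1 g2 lam (clamp p0 0 x)) /\
  (forall x, aa p1 g1 g2 lam (clamp p0 0 x) ^ 2 = lam - 2 * Gam p1 g1 g2 (clamp p0 0 x)).
Proof.
  intros Hp Hi HM HM0 Had.
  assert (Hpos : forall x, 0 < lam - 2 * Gam p1 g1 g2 (clamp p0 0 x)).
  { intros x. specialize (Had (clamp p0 0 x) (clamp_in p0 0 x ltac:(lra))). lra. }
  split; [|split].
  - intros x. unfold aa. apply (continuous_sqrt_comp (fun t => lam - 2 * Gam p1 g1 g2 (clamp p0 0 t))).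
    apply cminus. apply cconst. apply cmul. apply cconst.
    apply eps_cont. intros eps He. exists (eps / (M + 1)). split. apply Rdiv_lt_0_compat; lra.
    intros y Hy. eapply Rle_lt_trans. apply (Gam_lip p0); auto; apply clamp_in; lra.
    apply Rle_lt_trans with (M * Rabs (y - x)). apply Rmult_le_compat_l; auto. apply clamp_lip; lra.
    apply Rle_lt_trans with ((M + 1) * Rabs (y - x)). assert (0 <= Rabs (y - x)) by apply Rabs_pos. nra.
    apply (Rmult_lt_reg_l (/ (M + 1))). apply Rinv_0_lt_compat; lra.
    rewrite <- Rmult_assoc, Rinv_l, Rmult_1_l by lra. unfold Rdiv in Hy. lra.
  - intros x. unfold aa. apply sqrt_lt_R0. auto.
  - intros x. unfold aa. apply pow2_sqrt. left; auto.
Qed.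

Lemma Sol_conc p0 p1 g1 g2 M lam mu (z dz : R -> R -> R -> R) : p0 < 0 -> ex_RInt (gam p1 g1 g2) p0 0 ->
  (forall x, p0 <= x <= 0 -> Rabs (gam p1 g1 g2 x) <= M) -> 0 <= M ->
  admissible p0 p1 g1 g2 lam ->
  is_zsol p0 (aa p1 g1 g2 lam) mu (z lam mu) (dz lam mu) ->
  Sol p0 (fun x => aa p1 g1 g2 lam (clamp p0 0 x)) mu (fun x => z lam mu (clamp p0 0 x)) (fun x => dz lam mu (clamp p0 0 x)).
Proof.
  intros Hp Hi HM HM0 Had (Hz0 & Hd0 & Hzc & Hdc & Hdz & Hdw).
  destruct (Acl_props p0 p1 g1 g2 M lam Hp Hi HM HM0 Had) as (HAc & HAp & _).
  assert (Hp0 : clamp p0 0 p0 = p0) by (apply clamp_id; lra).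
  unfold Sol. refine (conj _ (conj _ (conj _ (conj _ (conj _ (conj _ (conj _ _))))))).
  - exact HAc.
  - exact HAp.
  - apply lim_clamp; auto. lra.
  - apply lim_clamp; auto. lra.
  - rewrite Hp0; auto.
  - rewrite Hp0; auto.
  - intros p Hpp. rewrite (clamp_id p0 0 p) by lra.
    apply (is_derive_ext_loc (z lam mu)). 
    destruct (clamp_loc p0 0 p Hpp) as [e He]. exists e. intros t Ht. rewrite (He t Ht). auto.
    apply is_derive_Reals. auto.
  - intros p Hpp. rewrite (clamp_id p0 0 p) by lra.
    apply (is_derive_ext_loc (fun q => aa p1 g1 g2 lam q ^ 3 * dz lam mu q)).
    destruct (clamp_loc p0 0 p Hpp) as [e He]. exists e. intros t Ht. rewrite (He t Ht). auto.
    apply is_derive_Reals. auto.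
Qed.

Lemma Rpower32 l : 0 < l -> Rpower l (3 / 2) = sqrt l ^ 3.
Proof.
  intros Hl. replace (3 / 2) with (1 + / 2) by field. rewrite Rpower_plus, Rpower_1, Rpower_sqrt by auto.
  simpl. rewrite Rmult_1_r. rewrite <- Rmult_assoc, sqrt_sqrt by lra. ring.
Qed.

Theorem lemma4p4 (g sigma p0 p1 alpha : R) (g1 g2 : R -> R)
  (z dz : R -> R -> R -> R) (lam0 lb mb : R) :
  0 < g -> 0 < sigma -> p0 < p1 -> p1 < 0 -> 0 < alpha < 1 ->
  holder alpha g1 p0 p1 -> holder alpha g2 p1 0 ->
  (forall lam mu, admissible p0 p1 g1 g2 lam ->
     is_zsol p0 (aa p1 g1 g2 lam) mu (z lam mu) (dz lam mu)) ->
  admissible p0 p1 g1 g2 lam0 ->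
  / g = Defs.RInt (fun p => / (aa p1 g1 g2 lam0 p) ^ 3) p0 0 ->
  lam0 <= lb -> 0 < mb -> Xi g sigma z dz lb mb = 0 ->
  (exists d, derivable_pt_lim (fun l => Xi g sigma z dz l mb) lb d /\ 0 < d) /\
  (exists d, derivable_pt_lim (fun m => Xi g sigma z dz lb m) mb d /\ d < 0).
Proof.
  intros Hg Hs H01 H1 Hal Hg1 Hg2 Hz Had0 Hlam0 Hlb Hmb HXi.
  assert (Hp : p0 < 0) by lra.
  destruct (gam_int p0 p1 g1 g2 alpha H01 H1 ltac:(lra) Hg1 Hg2) as [Hi [M [HM0 HM]]].
  assert (Hadb : admissible p0 p1 g1 g2 lb) by (intros p Hpp; specialize (Had0 p Hpp); lra).
  set (Acl := fun l x => aa p1 g1 g2 l (clamp p0 0 x)).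
  set (Zcl := fun l mu x => z l mu (clamp p0 0 x)).
  set (Dcl := fun l mu x => dz l mu (clamp p0 0 x)).
  assert (HSol : forall l mu, admissible p0 p1 g1 g2 l -> Sol p0 (Acl l) mu (Zcl l mu) (Dcl l mu)).
  { intros l mu Hl. apply (Sol_conc p0 p1 g1 g2 M); auto. }
  assert (Hc0 : clamp p0 0 0 = 0) by (apply clamp_id; lra).
  assert (HXf : forall l mu, admissible p0 p1 g1 g2 l ->
     Xi g sigma z dz l mu = Acl l 0 ^ 3 * Dcl l mu 0 - (g + sigma * mu) * Zcl l mu 0).
  { intros l mu Hl. unfold Xi, Acl, Dcl, Zcl. rewrite Hc0. unfold aa. rewrite Gam0, Rmult_0_r, Rminus_0_r.
    rewrite Rpower32. auto. specialize (Hl 0 ltac:(lra)). rewrite Gam0 in Hl. lra. }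
  assert (HAsq : forall l x, admissible p0 p1 g1 g2 l -> Acl l x ^ 2 = l - 2 * Gam p1 g1 g2 (clamp p0 0 x)).
  { intros l x Hl. destruct (Acl_props p0 p1 g1 g2 M l Hp Hi HM HM0 Hl) as (_ & _ & E). apply E. }
  split.
  -
    destruct (Acl_props p0 p1 g1 g2 M lb Hp Hi HM HM0 Hadb) as (HAc & HAp & _).
    destruct (posmin p0 (Acl lb)) as [m [Hm Hmq]]. lra. apply HAc. intros; apply HAp.
    assert (Hadm : forall l, Rabs (l - lb) < m ^ 2 -> admissible p0 p1 g1 g2 l).
    { intros l Hl p Hpp. specialize (Hmq p Hpp). assert (E := HAsq lb p Hadb).
      rewrite clamp_id in E by lra.
      assert (m ^ 2 <= Acl lb p ^ 2) by (apply pow_incr; lra).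
      apply Rabs_def2 in Hl. lra. }
    apply (main_lam p0 g sigma mb lb Acl (fun l => Zcl l mb) (fun l => Dcl l mb) (fun l => Xi g sigma z dz l mb) (m ^ 2)).
    all: try lra.
    + apply pow_lt; auto.
    + intros l Hl. apply HSol. auto.
    + intros l x Hl. rewrite !HAsq; auto. ring.
    + intros l Hl. apply HXf; auto.
    + auto.
  -
    apply (main_mu p0 g sigma mb (Acl lb) (Zcl lb) (Dcl lb) (fun m => Xi g sigma z dz lb m)); auto.
    destruct (Acl_props p0 p1 g1 g2 M lb Hp Hi HM HM0 Hadb) as (HAc & HAp & HAs).
    destruct (Acl_props p0 p1 g1 g2 M lam0 Hp Hi HM HM0 Had0) as (HAc0 & HAp0 & HAs0).
    assert (Hf0 : ex_RInt (fun p => / aa p1 g1 g2 lam0 p ^ 3) p0 0).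
    { apply (ex_RInt_ext (fun p => / Acl lam0 p ^ 3)).
      intros x Hx. rewrite Rmin_left in Hx by lra. rewrite Rmax_right in Hx by lra.
      unfold Acl. rewrite clamp_id by lra. auto.
      apply exR. intros x. apply cinv. apply cpow; auto. apply Rgt_not_eq, pow_lt, HAp0. }
    rewrite Hlam0, RInt_defs by auto.
    apply RInt_le. lra. apply exR. intros x. apply cinv. apply cpow; auto. apply Rgt_not_eq, pow_lt, HAp.
    auto.
    intros x Hx. unfold Acl. rewrite clamp_id by lra.
    assert (Hle : aa p1 g1 g2 lam0 x <= aa p1 g1 g2 lb x) by (unfold aa; apply sqrt_le_1_alt; lra).
    assert (P0 := HAp0 x). unfold Acl in P0. rewrite clamp_id in P0 by lra.
    apply Rinv_le_contravar. apply pow_lt; auto. apply pow_incr; lra.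
Qed.
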